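(* Let $\lambda>0$ with $\lambda^{-2}$ an integer and $\delta>0$. For all sufficiently large $N$ (depending on $\lambda$) the following holds. Let $f,g:[N]\to[-1,1]$ and suppose $|\widehat f(\frac aq+\beta)|\le\delta|\beta|N^2$ for all integers $1\le a,q\le\lambda^{-2}$ and all $\beta\in\mathbb{R}$. Then $$\Big|\sum_{n\ge1}(f*g)(n)1_S(n)\Big|\le 10(\delta\lambda^{-8}+\lambda)N^{3/2}.$$
   Context: $e(\theta):=e^{2\pi i\theta}$; for $f:[N]\to\mathbb{C}$, $\widehat f(\theta):=\sum_{n\le N}f(n)e(-n\theta)$. For finitely supported $f,g:\mathbb{Z}\to\mathbb{C}$ (functions on $[N]$ extended by $0$), $(f*g)(x):=\sum_{n\in\mathbb{Z}}f(n)g(x-n)$. $S:=\{m^2:m\in\mathbb{N}\}$. *)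

(* Defs.v *)
From Stdlib Require Import Reals Lra Lia ZArith List.
From Coquelicot Require Import Coquelicot.
Open Scope R_scope.

Definition sumR (lo hi : nat) (F : nat -> R) : R :=
  fold_right (fun n acc => F n + acc) 0 (seq lo (S hi - lo)).

Definition sumC (lo hi : nat) (F : nat -> C) : C :=
  fold_right (fun n acc => Cplus (F n) acc) (RtoC 0) (seq lo (S hi - lo)).

(* e(theta) = exp(2 pi i theta) = cos(2 pi theta) + i sin(2 pi theta) *)
Definition e (theta : R) : C := (cos (2 * PI * theta), sin (2 * PI * theta)).

(* Fourier transform of f : [N] -> R, [N] = {1,...,N} *)
Definition fhat (N : nat) (f : nat -> R) (theta : R) : C :=
  sumC 1 N (fun n => Cmult (RtoC (f n)) (e (- (INR n) * theta))).

Definition ext (N : nat) (f : nat -> R) (z : Z) : R :=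
  if ((1 <=? z)%Z && (z <=? Z.of_nat N)%Z)%bool then f (Z.to_nat z) else 0.

(* (f * g)(x) = sum_{n in Z} f(n) g(x - n); only n in [N] contribute *)
Definition conv (N : nat) (f g : nat -> R) (x : Z) : R :=
  sumR 1 N (fun n => ext N f (Z.of_nat n) * ext N g (x - Z.of_nat n)%Z).

(* indicator of S = { m^2 : m in N } *)
Definition ind_S (n : nat) : R :=
  if Nat.eqb (Nat.sqrt n * Nat.sqrt n) n then 1 else 0.

(* Main.v *)
Require Import Defs.
From Stdlib Require Import Reals ZArith Lra Lia List Permutation Bool Arith Classical.
From Coquelicot Require Import Coquelicot.
Open Scope nat_scope.

Lemma pigeon Q : forall f : nat -> nat, (forall i, i <= Q -> f i < Q) ->
  exists i i', i < i' <= Q /\ f i = f i'.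
Proof.
  induction Q; intros f Hf.
  - specialize (Hf 0 (le_n 0)). lia.
  - set (v := f (S Q)).
    destruct (classic (exists i, i <= Q /\ f i = v)) as [[i [Hi Hv]]|Hn].
    + exists i, (S Q). split; [lia|]. auto.
    + assert (Hv: v < S Q) by (apply Hf; lia).
      set (f' := fun i => if f i <? v then f i else f i - 1).
      destruct (IHQ f') as [i [i' [Hii Heq]]].
      * intros i Hi. unfold f'. assert (f i <> v) by (intro; apply Hn; exists i; auto).
        assert (f i < S Q) by (apply Hf; lia).
        destruct (f i <? v) eqn:E; [apply Nat.ltb_lt in E| apply Nat.ltb_ge in E]; lia.
      * exists i, i'. split; [lia|].
        assert (f i <> v) by (intro; apply Hn; exists i; split; auto; lia).
        assert (f i' <> v) by (intro; apply Hn; exists i'; split; auto; lia).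
        unfold f' in Heq.
        destruct (f i <? v) eqn:E; [apply Nat.ltb_lt in E| apply Nat.ltb_ge in E];
        destruct (f i' <? v) eqn:E'; [apply Nat.ltb_lt in E'| apply Nat.ltb_ge in E'| apply Nat.ltb_lt in E'| apply Nat.ltb_ge in E']; lia.
Qed.

Lemma dirichlet0 P j Q : 0 < P -> 0 < Q ->
  exists q a, 1 <= q <= Q /\ (Z.abs (Z.of_nat (q * j) - Z.of_nat (P * a)) * Z.of_nat Q < Z.of_nat P)%Z.
Proof.
  intros HP HQ.
  destruct (pigeon Q (fun i => (Q * ((i * j) mod P)) / P)) as [i [i' [Hii Heq]]].
  { intros i _. apply Nat.Div0.div_lt_upper_bound. pose proof (Nat.mod_upper_bound (i * j) P ltac:(lia)). nia. }
  exists (i' - i), ((i' * j) / P - (i * j) / P). split; [lia|].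
  pose proof (Nat.div_mod (i * j) P ltac:(lia)) as E1.
  pose proof (Nat.div_mod (i' * j) P ltac:(lia)) as E2.
  pose proof (Nat.mod_upper_bound (i * j) P ltac:(lia)) as R1.
  pose proof (Nat.mod_upper_bound (i' * j) P ltac:(lia)) as R2.
  set (r := (i * j) mod P) in *. set (r' := (i' * j) mod P) in *.
  pose proof (Nat.div_mod (Q * r) P ltac:(lia)) as E3.
  pose proof (Nat.div_mod (Q * r') P ltac:(lia)) as E4.
  pose proof (Nat.mod_upper_bound (Q * r) P ltac:(lia)) as R3.
  pose proof (Nat.mod_upper_bound (Q * r') P ltac:(lia)) as R4.
  assert (Hm: i * j <= i' * j) by (apply Nat.mul_le_mono_r; lia).
  assert (Hd: (i * j) / P <= (i' * j) / P) by (apply Nat.Div0.div_le_mono; auto).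
  set (w := (Q * r) / P) in *. set (w' := (Q * r') / P) in *.
  assert (w = w') by exact Heq.
  set (A := (i*j)/P) in *. set (A' := (i'*j)/P) in *.
  assert (Hqj: (i' - i) * j = i' * j - i * j) by (rewrite Nat.mul_sub_distr_r; reflexivity).
  assert (HPa: P * (A' - A) = P * A' - P * A) by (rewrite Nat.mul_sub_distr_l; reflexivity).
  rewrite Hqj, HPa.
  assert (P * A <= P * A') by (apply Nat.mul_le_mono_l; auto).
  rewrite !Nat2Z.inj_sub by lia.
  assert (Z.of_nat (i' * j) = Z.of_nat (P * A') + Z.of_nat r')%Z by lia.
  assert (Z.of_nat (i * j) = Z.of_nat (P * A) + Z.of_nat r)%Z by lia.
  assert (Z.of_nat (Q * r) = Z.of_nat (P * w) + Z.of_nat ((Q*r) mod P))%Z by lia.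
  assert (Z.of_nat (Q * r') = Z.of_nat (P * w) + Z.of_nat ((Q*r') mod P))%Z by (subst w; lia).
  rewrite Nat2Z.inj_mul in H3, H4.
  assert (Z.abs (Z.of_nat r' - Z.of_nat r) * Z.of_nat Q = Z.abs (Z.of_nat Q * Z.of_nat r' - Z.of_nat Q * Z.of_nat r))%Z.
  { rewrite <- (Z.abs_eq (Z.of_nat Q)) at 1 by lia. rewrite <- Z.abs_mul. f_equal. ring. }
  replace (Z.of_nat (i' * j) - Z.of_nat (i * j) - (Z.of_nat (P * A') - Z.of_nat (P * A)))%Z
    with (Z.of_nat r' - Z.of_nat r)%Z by lia.
  rewrite H5. lia.
Qed.

Lemma dirichlet P j Q : 0 < P -> 0 < Q ->
  exists q a, 1 <= q <= Q /\ Nat.gcd a q = 1 /\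
  (Z.abs (Z.of_nat (q * j) - Z.of_nat (P * a)) * Z.of_nat Q < Z.of_nat P)%Z.
Proof.
  intros HP HQ. destruct (dirichlet0 P j Q HP HQ) as [q [a [Hq Ha]]].
  set (g := Nat.gcd a q).
  assert (Hg: g <> 0) by (intro Hg; apply Nat.gcd_eq_0 in Hg; lia).
  destruct (Nat.gcd_divide_l a q) as [a' Ea]. destruct (Nat.gcd_divide_r a q) as [q' Eq].
  fold g in Ea, Eq.
  exists q', a'.
  assert (Hg1: Nat.gcd a' q' = 1).
  { pose proof (Nat.gcd_div_gcd a q g Hg eq_refl).
    rewrite Ea, Eq, !Nat.div_mul in H by auto. exact H. }
  split; [|split; auto].
  - split; [destruct q'; lia|]. rewrite Eq in Hq. nia.
  - rewrite Ea, Eq in Ha.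
    replace (Z.of_nat (q' * g * j) - Z.of_nat (P * (a' * g)))%Z with
      (Z.of_nat g * (Z.of_nat (q' * j) - Z.of_nat (P * a')))%Z in Ha by (rewrite !Nat2Z.inj_mul; ring).
    rewrite Z.abs_mul, (Z.abs_eq (Z.of_nat g)) in Ha by lia.
    assert (0 <= Z.abs (Z.of_nat (q' * j) - Z.of_nat (P * a')) * Z.of_nat Q)%Z by (apply Z.mul_nonneg_nonneg; lia).
    nia.
Qed.

Open Scope R_scope.

Definition sR (a n : nat) (F : nat -> R) : R :=
  fold_right (fun i acc => F i + acc) 0 (seq a n).

Lemma sumR_sR lo hi F : sumR lo hi F = sR lo (S hi - lo) F.
Proof. reflexivity. Qed.

Lemma sR_0 a F : sR a 0 F = 0. Proof. reflexivity. Qed.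
Lemma sR_S a n F : sR a (S n) F = F a + sR (S a) n F. Proof. reflexivity. Qed.

Lemma sR_Sr a n F : sR a (S n) F = sR a n F + F (a + n)%nat.
Proof.
  revert a; induction n; intros a.
  - rewrite !sR_S, !sR_0, Nat.add_0_r. ring.
  - rewrite sR_S, IHn, sR_S. replace (S a + n)%nat with (a + S n)%nat by lia. ring.
Qed.

Lemma sR_ext a n F G : (forall i, (a <= i < a + n)%nat -> F i = G i) -> sR a n F = sR a n G.
Proof.
  revert a; induction n; intros a H; [reflexivity|].
  rewrite !sR_S. rewrite H by lia. rewrite (IHn (S a)); [reflexivity|]. intros; apply H; lia.
Qed.

Lemma sR_le a n F G : (forall i, (a <= i < a + n)%nat -> F i <= G i) -> sR a n F <= sR a n G.
Proof.
  revert a; induction n; intros a H; [rewrite !sR_0; lra|].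
  rewrite !sR_S. apply Rplus_le_compat; [apply H; lia| apply IHn; intros; apply H; lia].
Qed.

Lemma sR_plus a n F G : sR a n (fun i => F i + G i) = sR a n F + sR a n G.
Proof. revert a; induction n; intros a; [rewrite !sR_0; ring| rewrite !sR_S, IHn; ring]. Qed.

Lemma sR_minus a n F G : sR a n (fun i => F i - G i) = sR a n F - sR a n G.
Proof. revert a; induction n; intros a; [rewrite !sR_0; ring| rewrite !sR_S, IHn; ring]. Qed.

Lemma sR_scal a n c F : sR a n (fun i => c * F i) = c * sR a n F.
Proof. revert a; induction n; intros a; [rewrite !sR_0; ring| rewrite !sR_S, IHn; ring]. Qed.

Lemma sR_scal_r a n c F : sR a n (fun i => F i * c) = sR a n F * c.
Proof. revert a; induction n; intros a; [rewrite !sR_0; ring| rewrite !sR_S, IHn; ring]. Qed.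

Lemma sR_opp a n F : sR a n (fun i => - F i) = - sR a n F.
Proof. revert a; induction n; intros a; [rewrite !sR_0; ring| rewrite !sR_S, IHn; ring]. Qed.

Lemma sR_const a n c : sR a n (fun _ => c) = INR n * c.
Proof. revert a; induction n; intros a; [rewrite sR_0; simpl; ring|]. rewrite sR_S, IHn, S_INR. ring. Qed.

Lemma sR_zero a n : sR a n (fun _ => 0) = 0.
Proof. rewrite sR_const; ring. Qed.

Lemma sR_abs a n F : Rabs (sR a n F) <= sR a n (fun i => Rabs (F i)).
Proof.
  revert a; induction n; intros a.
  - rewrite !sR_0, Rabs_R0; lra.
  - rewrite !sR_S. eapply Rle_trans; [apply Rabs_triang|]. specialize (IHn (S a)). lra.
Qed.

Lemma sR_nonneg a n F : (forall i, (a <= i < a + n)%nat -> 0 <= F i) -> 0 <= sR a n F.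
Proof. intros H. rewrite <- (sR_zero a n). apply sR_le; auto. Qed.

Lemma sR_split a n m F : sR a (n + m) F = sR a n F + sR (a + n) m F.
Proof.
  revert a; induction n; intros a.
  - rewrite Nat.add_0_l, Nat.add_0_r, sR_0; ring.
  - rewrite Nat.add_succ_l, !sR_S, IHn. replace (S a + n)%nat with (a + S n)%nat by lia. ring.
Qed.

Lemma sR_shift a d n F : sR (a + d) n F = sR a n (fun i => F (i + d)%nat).
Proof.
  revert a; induction n; intros a; [reflexivity|].
  rewrite !sR_S. replace (S (a + d)) with (S a + d)%nat by lia. rewrite IHn. reflexivity.
Qed.

Lemma sR_swap a n b m (F : nat -> nat -> R) :
  sR a n (fun i => sR b m (fun j => F i j)) = sR b m (fun j => sR a n (fun i => F i j)).
Proof.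
  revert a; induction n; intros a.
  - rewrite sR_0. symmetry. apply sR_zero.
  - rewrite sR_S, IHn. rewrite <- sR_plus. apply sR_ext; intros; rewrite sR_S; reflexivity.
Qed.

Lemma sR_mult a n b m F G :
  sR a n F * sR b m G = sR a n (fun i => sR b m (fun j => F i * G j)).
Proof.
  rewrite <- sR_scal_r. apply sR_ext. intros. rewrite sR_scal. reflexivity.
Qed.

Lemma sR_delta a n i0 F :
  sR a n (fun i => if Nat.eqb i i0 then F i else 0) =
  if (Nat.leb a i0 && Nat.ltb i0 (a + n))%bool then F i0 else 0.
Proof.
  revert a; induction n; intros a.
  - rewrite sR_0. destruct (Nat.leb a i0 && Nat.ltb i0 (a+0))%bool eqn:E; [|reflexivity].
    apply andb_true_iff in E as [E1 E2]. apply Nat.leb_le in E1; apply Nat.ltb_lt in E2; lia.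
  - rewrite sR_S, IHn. destruct (Nat.eqb a i0) eqn:E.
    + apply Nat.eqb_eq in E; subst.
      replace (Nat.leb (S i0) i0) with false by (symmetry; apply Nat.leb_gt; lia).
      replace (Nat.leb i0 i0 && Nat.ltb i0 (i0 + S n))%bool with true.
      * simpl; ring.
      * symmetry; apply andb_true_iff; split; [apply Nat.leb_le|apply Nat.ltb_lt]; lia.
    + apply Nat.eqb_neq in E.
      replace (Nat.leb (S a) i0 && Nat.ltb i0 (S a + n))%bool with (Nat.leb a i0 && Nat.ltb i0 (a + S n))%bool.
      * ring.
      * destruct (Nat.leb (S a) i0) eqn:E1, (Nat.leb a i0) eqn:E2, (Nat.ltb i0 (S a + n)) eqn:E3, (Nat.ltb i0 (a + S n)) eqn:E4; simpl; auto;
        rewrite ?Nat.leb_le, ?Nat.leb_gt, ?Nat.ltb_lt, ?Nat.ltb_ge in *; lia.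
Qed.

Lemma sR_blocks q nb F : sR 0 (q * nb) F = sR 0 nb (fun b => sR 0 q (fun y => F (b * q + y)%nat)).
Proof.
  induction nb.
  - rewrite Nat.mul_0_r; reflexivity.
  - replace (q * S nb)%nat with (q * nb + q)%nat by lia. rewrite sR_split, IHnb, sR_Sr.
    f_equal. replace (0 + q * nb)%nat with (0 + q * nb)%nat by lia.
    rewrite (sR_shift 0 (q*nb) q). apply sR_ext; intros. f_equal; lia.
Qed.

Definition lsum (l : list nat) (F : nat -> R) := fold_right (fun i acc => F i + acc) 0 l.

Lemma lsum_perm l l' F : Permutation l l' -> lsum l F = lsum l' F.
Proof.
  induction 1; simpl; try lra.
Qed.

Lemma lsum_map l h F : lsum (map h l) F = lsum l (fun i => F (h i)).
Proof. induction l; simpl; auto. fold (lsum (map h l) F). rewrite IHl; reflexivity. Qed.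

Lemma sR_reindex a q (h : nat -> nat) F :
  (forall y, (a <= y < a + q)%nat -> (h y < q)%nat) ->
  (forall y1 y2, (a <= y1 < a + q)%nat -> (a <= y2 < a + q)%nat -> h y1 = h y2 -> y1 = y2) ->
  sR a q (fun y => F (h y)) = sR 0 q F.
Proof.
  intros Hr Hi. unfold sR. fold (lsum (seq a q) (fun y => F (h y))). fold (lsum (seq 0 q) F).
  rewrite <- lsum_map. apply lsum_perm.
  apply NoDup_Permutation_bis.
  - apply NoDup_map_inv' with (f := id) || idtac.
    apply FinFun.Injective_map_NoDup_in; [|apply seq_NoDup].
    intros x y Hx Hy. apply in_seq in Hx, Hy. apply Hi; lia.
  - rewrite length_map, !length_seq. lia.
  - intros x Hx. apply in_map_iff in Hx as [y [<- Hy]]. apply in_seq in Hy. apply in_seq. specialize (Hr y). lia.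
Qed.

Lemma sR_interval n (P : nat -> bool) G :
  (forall u v w, P u = true -> P w = true -> (u <= v <= w)%nat -> P v = true) ->
  exists A len, sR 0 n (fun u => if P u then G u else 0) = sR A len G /\
    (forall v, (A <= v < A + len)%nat -> P v = true) /\ (A + len <= n)%nat.
Proof.
  intros Hc.
  assert (H: exists A len, sR 0 n (fun u => if P u then G u else 0) = sR A len G /\
    (forall v, (v < n)%nat -> (P v = true <-> (A <= v < A + len)%nat)) /\ (A + len <= n)%nat).
  { induction n.
    - exists 0%nat, 0%nat. split; [reflexivity|]. split; [intros; lia| lia].
    - destruct IHn as [A [len [E [Hiff Hle]]]].
      rewrite sR_Sr, E. simpl.
      destruct (P n) eqn:Pn.
      + destruct len.
        * exists n, 1%nat. split; [rewrite sR_S, !sR_0; ring|]. split; [|lia].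
          intros v Hv. destruct (Nat.eq_dec v n); [subst; split; auto; lia|].
          split; intros Hp; [apply Hiff in Hp; lia| lia].
        * assert (A + S len = n)%nat as Heq.
          { destruct (Nat.eq_dec (A + S len) n); auto.
            assert (P (A + S len)%nat = true).
            { apply (Hc (A + len)%nat _ n); auto; [apply Hiff; lia| lia]. }
            apply Hiff in H; lia. }
          exists A, (S (S len)). split; [rewrite (sR_Sr A (S len)); rewrite Heq; ring|].
          split; [|lia]. intros v Hv. destruct (Nat.eq_dec v n); [subst; split; auto; lia|].
          rewrite Hiff by lia. lia.
      + exists A, len. split; [ring|]. split; [|lia]. intros v Hv.
        destruct (Nat.eq_dec v n); [subst; split; [congruence|]|apply Hiff; lia].
        intros Hv2. assert (A + len <= n)%nat by lia. lia. }
  destruct H as [A [len [E [Hiff Hle]]]]. exists A, len. split; auto. split; auto.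
  intros v Hv. apply Hiff; lia.
Qed.

Lemma PI_gt3 : 3 < PI. Proof. pose proof PI2_3_2. lra. Qed.

Lemma sin_lb3 x : 0 <= x -> x <= 2 -> x/3 <= sin x.
Proof. intros.
 destruct (pre_sin_bound x 1 H) as [H2 _]. lra.
 unfold sin_approx, sin_term in H2. simpl in H2.
 match type of H2 with ?a <= _ => assert (E: a = x - x^3/6 + x^5/120 - x^7/5040) by field end.
 rewrite E in H2.
 assert (0<= x^2) by nra. assert (x^2 <= 4) by nra.
 assert (0 <= x^5*(42 - x^2)) by (apply Rmult_le_pos; [apply pow_le; lra| nra]).
 assert (0 <= x * (4 - x^2)) by (apply Rmult_le_pos; lra).
 nra. Qed.

Lemma sin_third x : 0 <= x -> x <= PI/2 -> x/3 <= sin x.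
Proof. intros. apply sin_lb3; auto. pose proof PI_4. lra. Qed.

Lemma telescope a n (g : nat -> R) : sR a n (fun t => g (S t) - g t) = g (a + n)%nat - g a.
Proof.
  revert a; induction n; intros a.
  - rewrite sR_0, Nat.add_0_r; ring.
  - rewrite sR_S, IHn. replace (S a + n)%nat with (a + S n)%nat by lia. ring.
Qed.

Lemma sin_periodZ x (n : Z) : sin (x + 2 * IZR n * PI) = sin x.
Proof.
  destruct (Z_le_gt_dec 0 n).
  - rewrite <- (Z2Nat.id n) by lia. rewrite <- INR_IZR_INZ. apply sin_period.
  - replace n with (- Z.of_nat (Z.to_nat (- n)))%Z by lia.
    rewrite opp_IZR, <- INR_IZR_INZ.
    rewrite <- (sin_period (x + 2 * - INR (Z.to_nat (- n)) * PI) (Z.to_nat (-n))). f_equal. ring.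
Qed.

Lemma cos_periodZ x (n : Z) : cos (x + 2 * IZR n * PI) = cos x.
Proof.
  destruct (Z_le_gt_dec 0 n).
  - rewrite <- (Z2Nat.id n) by lia. rewrite <- INR_IZR_INZ. apply cos_period.
  - replace n with (- Z.of_nat (Z.to_nat (- n)))%Z by lia.
    rewrite opp_IZR, <- INR_IZR_INZ.
    rewrite <- (cos_period (x + 2 * - INR (Z.to_nat (- n)) * PI) (Z.to_nat (-n))). f_equal. ring.
Qed.

Lemma abs_sin_shift_nat x (n : nat) : Rabs (sin (x + INR n * PI)) = Rabs (sin x).
Proof.
  induction n.
  - simpl. rewrite Rmult_0_l, Rplus_0_r. reflexivity.
  - rewrite S_INR. replace (x + (INR n + 1) * PI) with ((x + INR n * PI) + PI) by ring.
    rewrite neg_sin, Rabs_Ropp. auto.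
Qed.

Lemma abs_sin_shift x (n : Z) : Rabs (sin (x + IZR n * PI)) = Rabs (sin x).
Proof.
  destruct (Z_le_gt_dec 0 n).
  - rewrite <- (Z2Nat.id n) by lia. rewrite <- INR_IZR_INZ. apply abs_sin_shift_nat.
  - replace n with (- Z.of_nat (Z.to_nat (- n)))%Z by lia.
    rewrite opp_IZR, <- INR_IZR_INZ.
    rewrite <- (abs_sin_shift_nat (x + - INR (Z.to_nat (- n)) * PI) (Z.to_nat (-n))). f_equal. f_equal. ring.
Qed.

Lemma lin_cos_bound a K al ph : sin (al/2) <> 0 ->
  Rabs (sR a K (fun t => cos (al * INR t + ph))) <= / Rabs (sin (al/2)).
Proof.
  intros Hs.
  set (g := fun t : nat => sin (al * INR t + ph - al/2)).
  assert (E: sR a K (fun t => cos (al * INR t + ph)) =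
             / (2 * sin (al/2)) * sR a K (fun t => g (S t) - g t)).
  { rewrite <- sR_scal. apply sR_ext. intros i _. unfold g. cbv beta. rewrite S_INR.
    replace (al * (INR i + 1) + ph - al / 2) with ((al * INR i + ph) + al/2) by lra.
    replace (al * INR i + ph - al / 2) with ((al * INR i + ph) - al/2) by ring.
    rewrite sin_plus, sin_minus. field. auto. }
  rewrite E, telescope, Rabs_mult, Rabs_inv, Rabs_mult.
  rewrite (Rabs_right 2) by lra.
  assert (0 < Rabs (sin (al/2))) by (apply Rabs_pos_lt; auto).
  assert (Rabs (g (a + K)%nat - g a) <= 2).
  { unfold g. pose proof (SIN_bound (al * INR (a + K) + ph - al / 2)).
    pose proof (SIN_bound (al * INR a + ph - al / 2)). apply Rabs_le; lra. }
  apply Rle_trans with (/ (2 * Rabs (sin (al / 2))) * 2).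
  - apply Rmult_le_compat_l; auto. left; apply Rinv_0_lt_compat; lra.
  - right; field; lra.
Qed.

Lemma orth (P : nat) (d : Z) : (0 < P)%nat -> (Z.abs d < Z.of_nat P)%Z ->
  sR 0 P (fun j => cos (2 * PI * IZR d * INR j / INR P)) = if Z.eqb d 0 then INR P else 0.
Proof.
  intros HP Hd. destruct (Z.eqb d 0) eqn:Ed.
  - apply Z.eqb_eq in Ed; subst. rewrite (sR_ext _ _ _ (fun _ => 1)).
    + rewrite sR_const; ring.
    + intros. replace (2 * PI * IZR 0 * INR i / INR P) with 0 by (simpl; field; apply not_0_INR; lia). apply cos_0.
  - apply Z.eqb_neq in Ed.
    assert (HPr: 0 < INR P) by (apply lt_0_INR; lia).
    set (al := 2 * PI * IZR d / INR P).
    assert (Hs: sin (al/2) <> 0).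
    { unfold al. replace (2 * PI * IZR d / INR P / 2) with (PI * (IZR d / INR P)) by (field; lra).
      assert (Hdr: 0 < Rabs (IZR d) < INR P).
      { rewrite <- abs_IZR. rewrite INR_IZR_INZ. split; [apply IZR_lt; lia| apply IZR_lt; lia]. }
      destruct (Rle_dec 0 (IZR d)).
      - rewrite Rabs_right in Hdr by lra. apply Rgt_not_eq, sin_gt_0.
        + apply Rmult_lt_0_compat; [pose proof PI_gt3; lra|]. apply Rdiv_lt_0_compat; lra.
        + rewrite <- (Rmult_1_r PI) at 2. apply Rmult_lt_compat_l; [pose proof PI_gt3; lra|].
          apply Rmult_lt_reg_r with (INR P); auto. field_simplify; lra.
      - rewrite Rabs_left in Hdr by lra.
        replace (PI * (IZR d / INR P)) with (- (PI * (- IZR d / INR P))) by (field; lra).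
        rewrite sin_neg. apply Ropp_neq_0_compat. apply Rgt_not_eq, sin_gt_0.
        + apply Rmult_lt_0_compat; [pose proof PI_gt3; lra|]. apply Rdiv_lt_0_compat; lra.
        + rewrite <- (Rmult_1_r PI) at 2. apply Rmult_lt_compat_l; [pose proof PI_gt3; lra|].
          apply Rmult_lt_reg_r with (INR P); auto. field_simplify; lra. }
    set (g := fun t : nat => sin (al * INR t - al/2)).
    assert (E: sR 0 P (fun j => cos (2 * PI * IZR d * INR j / INR P)) =
             / (2 * sin (al/2)) * sR 0 P (fun t => g (S t) - g t)).
    { rewrite <- sR_scal. apply sR_ext. intros i _. unfold g. cbv beta. rewrite S_INR.
      replace (al * (INR i + 1) - al / 2) with ((al * INR i) + al/2) by lra.
      replace (al * INR i - al / 2) with ((al * INR i) - al/2) by ring.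
      rewrite sin_plus, sin_minus. unfold al. replace (2 * PI * IZR d * INR i / INR P) with (2 * PI * IZR d / INR P * INR i) by (field; lra). field. auto. }
    rewrite E, telescope. unfold g. simpl INR at 2. rewrite Nat.add_0_l.
    replace (al * INR P - al / 2) with (- (al/2) + 2 * IZR d * PI) by (unfold al; field; lra).
    rewrite sin_periodZ. replace (al * 0 - al / 2) with (- (al/2)) by ring. ring.
Qed.

Definition fl (y : R) : R := IZR (up y) - 1.
Definition nrm (y : R) : R := Rmin (y - fl y) (fl y + 1 - y).

Lemma fl_spec y : fl y <= y < fl y + 1.
Proof. unfold fl. destruct (archimed y). lra. Qed.

Lemma nrm_nonneg y : 0 <= nrm y.
Proof. unfold nrm. pose proof (fl_spec y). apply Rmin_glb; lra. Qed.

Lemma nrm_le y (n : Z) : nrm y <= Rabs (y - IZR n).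
Proof.
  unfold nrm. pose proof (fl_spec y). unfold fl in *.
  destruct (Z_le_gt_dec n (up y - 1)).
  - apply Rle_trans with (y - (IZR (up y) - 1)); [apply Rmin_l|].
    assert (IZR n <= IZR (up y) - 1) by (rewrite <- minus_IZR; apply IZR_le; lia).
    rewrite Rabs_right; lra.
  - apply Rle_trans with (IZR (up y) - 1 + 1 - y); [apply Rmin_r|].
    assert (IZR (up y) <= IZR n) by (apply IZR_le; lia).
    rewrite Rabs_left1; lra.
Qed.

Lemma nrm_attained y : exists n : Z, nrm y = Rabs (y - IZR n).
Proof.
  unfold nrm. pose proof (fl_spec y). unfold fl in *.
  destruct (Rle_dec (y - (IZR (up y) - 1)) (IZR (up y) - 1 + 1 - y)).
  - exists (up y - 1)%Z. rewrite Rmin_left by lra. rewrite minus_IZR. rewrite Rabs_right; simpl; lra.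
  - exists (up y). rewrite Rmin_right by lra. rewrite Rabs_left1; lra.
Qed.

Lemma nrm_lip x y : nrm y - Rabs (x - y) <= nrm x.
Proof.
  destruct (nrm_attained x) as [n Hn]. pose proof (nrm_le y n).
  rewrite Hn. pose proof (Rabs_triang (y - x) (x - IZR n)).
  replace (y - x + (x - IZR n)) with (y - IZR n) in H0 by ring.
  rewrite (Rabs_minus_sym y x) in H0. lra.
Qed.

Lemma sin_nrm y : nrm y <= Rabs (sin (PI * y)).
Proof.
  pose proof (fl_spec y). unfold fl in *.
  set (f := y - (IZR (up y) - 1)).
  replace (PI * y) with (PI * f + IZR (up y - 1) * PI) by (unfold f; rewrite minus_IZR; simpl; ring).
  rewrite abs_sin_shift. pose proof PI_gt3. pose proof PI_4.
  assert (0 <= f < 1) by (unfold f; lra).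
  unfold nrm, fl. fold f.
  destruct (Rle_dec f (1/2)).
  - apply Rle_trans with f; [apply Rmin_l|].
    pose proof (sin_third (PI * f)). rewrite Rabs_right.
    + assert (f <= PI * f / 3) by nra. apply Rle_trans with (PI * f / 3); auto. apply H3; nra.
    + apply Rle_ge. apply sin_ge_0; nra.
  - apply Rle_trans with (IZR (up y) - 1 + 1 - y); [apply Rmin_r|].
    replace (IZR (up y) - 1 + 1 - y) with (1 - f) by (unfold f; ring).
    rewrite <- sin_PI_x. replace (PI - PI * f) with (PI * (1 - f)) by ring.
    pose proof (sin_third (PI * (1 - f))). rewrite Rabs_right.
    + assert (1 - f <= PI * (1 - f) / 3) by nra. apply Rle_trans with (PI * (1-f) / 3); auto. apply H3; nra.
    + apply Rle_ge. apply sin_ge_0; nra.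
Qed.

Lemma abel_inv (A n : nat) (w s : nat -> R) :
  (forall u, (A <= u <= A + n)%nat -> 0 <= w u) ->
  (forall u, (A <= u < A + n)%nat -> w (S u) <= w u) ->
  (forall u, Rabs (s u) <= 1) ->
  Rabs (sR A (S n) (fun u => w u * (s (S u) - s u)) - w (A + n)%nat * s (S (A + n))) <= 2 * w A - w (A + n)%nat.
Proof.
  intros Hw Hm Hs. induction n.
  - rewrite sR_S, sR_0, Nat.add_0_r.
    replace (w A * (s (S A) - s A) + 0 - w A * s (S A)) with (- (w A * s A)) by ring.
    rewrite Rabs_Ropp, Rabs_mult. rewrite (Rabs_right (w A)) by (apply Rle_ge, Hw; lia).
    specialize (Hs A). assert (0 <= w A) by (apply Hw; lia). nra.
  - rewrite sR_Sr.
    assert (IH: Rabs (sR A (S n) (fun u => w u * (s (S u) - s u)) - w (A + n)%nat * s (S (A + n))) <=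
      2 * w A - w (A + n)%nat) by (apply IHn; intros; [apply Hw|apply Hm]; lia).
    replace (A + S n)%nat with (S (A + n)) by lia.
    replace (sR A (S n) (fun u => w u * (s (S u) - s u)) + w (S (A + n)) * (s (S (S (A + n))) - s (S (A + n))) -
      w (S (A + n)) * s (S (S (A + n)))) with
      ((sR A (S n) (fun u => w u * (s (S u) - s u)) - w (A + n)%nat * s (S (A + n))) +
       (w (A + n)%nat - w (S (A + n))) * s (S (A + n))) by ring.
    eapply Rle_trans; [apply Rabs_triang|].
    assert (Hd: 0 <= w (A+n)%nat - w (S (A + n))) by (assert (w (S (A+n)) <= w (A+n)%nat) by (apply Hm; lia); lra).
    rewrite Rabs_mult, (Rabs_right (w (A + n)%nat - w (S (A + n)))) by lra.
    specialize (Hs (S (A+n))). nra.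
Qed.

Lemma abel (A n : nat) (w s : nat -> R) :
  (forall u, (A <= u <= A + n)%nat -> 0 <= w u) ->
  (forall u, (A <= u < A + n)%nat -> w (S u) <= w u) ->
  (forall u, Rabs (s u) <= 1) ->
  Rabs (sR A (S n) (fun u => w u * (s (S u) - s u))) <= 2 * w A.
Proof.
  intros Hw Hm Hs. pose proof (abel_inv A n w s Hw Hm Hs).
  assert (0 <= w (A+n)%nat) by (apply Hw; lia).
  pose proof (Hs (S (A + n))).
  assert (Rabs (w (A+n)%nat * s (S (A+n))) <= w (A+n)%nat) by (rewrite Rabs_mult, Rabs_right by lra; nra).
  pose proof (Rabs_triang (sR A (S n) (fun u => w u * (s (S u) - s u)) - w (A + n)%nat * s (S (A + n)))
     (w (A+n)%nat * s (S (A+n)))).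
  replace (sR A (S n) (fun u => w u * (s (S u) - s u)) - w (A + n)%nat * s (S (A + n)) +
     w (A+n)%nat * s (S (A+n))) with (sR A (S n) (fun u => w u * (s (S u) - s u))) in H3 by ring.
  lra.
Qed.

Definition wcot (d : R) := cos d / (2 * sin d).

Lemma wcot_mono d d' : 0 < d -> d <= d' -> d' <= PI/2 -> wcot d' <= wcot d.
Proof.
  intros. pose proof PI_gt3. unfold wcot.
  assert (0 < sin d) by (apply sin_gt_0; lra). assert (0 < sin d') by (apply sin_gt_0; lra).
  assert (0 <= sin (d' - d)) by (apply sin_ge_0; lra).
  rewrite sin_minus in H5.
  apply Rmult_le_reg_r with (2 * sin d * sin d'); [nra|].
  field_simplify; try lra.
Qed.

Lemma cos_abel_id th d : sin d <> 0 ->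
  cos th = (cos th - cos (th + 2 * d)) / 2 + wcot d * (sin (th + 2 * d) - sin th).
Proof.
  intros Hs. unfold wcot.
  rewrite cos_plus, sin_plus. replace (2 * d) with (d + d) by ring.
  rewrite cos_plus, sin_plus. pose proof (sin2_cos2 d). unfold Rsqr in H.
  apply Rminus_diag_uniq_sym.
  transitivity ((sin d * sin d + cos d * cos d - 1) * (cos th / 2 + sin th * cos d / (2 * sin d))).
  - field. auto.
  - rewrite H. ring.
Qed.

Lemma KL (A len : nat) (th d : nat -> R) (dl : R) : 0 < dl ->
  (forall u, (A <= u < A + len)%nat -> th (S u) = th u + 2 * d u /\ PI * dl <= d u <= PI / 2) ->
  (forall u, (A <= u)%nat -> (S u < A + len)%nat -> d u <= d (S u)) ->
  Rabs (sR A len (fun u => cos (th u))) <= 1 + / dl.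
Proof.
  intros Hdl Hth Hmon. pose proof PI_gt3.
  destruct len as [|n].
  - rewrite sR_0, Rabs_R0. assert (0 < /dl) by (apply Rinv_0_lt_compat; auto). lra.
  - assert (Hsin: forall u, (A <= u < A + S n)%nat -> 0 < sin (d u)).
    { intros u Hu. destruct (Hth u Hu) as [_ Hd]. apply sin_gt_0; nra. }
    rewrite (sR_ext _ _ _ (fun u => (cos (th u) - cos (th (S u))) / 2 + wcot (d u) * (sin (th (S u)) - sin (th u)))).
    2:{ intros u Hu. destruct (Hth u Hu) as [E _]. rewrite E. apply cos_abel_id. specialize (Hsin u Hu). lra. }
    rewrite sR_plus.
    assert (E1: sR A (S n) (fun u => (cos (th u) - cos (th (S u))) / 2) = - / 2 * sR A (S n) (fun u => cos (th (S u)) - cos (th u))).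
    { rewrite <- sR_scal. apply sR_ext. intros; field. }
    rewrite E1, (telescope A (S n) (fun u => cos (th u))).
    assert (H1: Rabs (- / 2 * (cos (th (A + S n)%nat) - cos (th A))) <= 1).
    { pose proof (COS_bound (th (A + S n)%nat)). pose proof (COS_bound (th A)). apply Rabs_le. lra. }
    assert (H2: Rabs (sR A (S n) (fun u => wcot (d u) * (sin (th (S u)) - sin (th u)))) <= 2 * wcot (d A)).
    { apply (abel A n (fun u => wcot (d u)) (fun u => sin (th u))).
      - intros u Hu. destruct (Hth u ltac:(lia)) as [_ Hd]. unfold wcot.
        apply Rmult_le_pos; [apply cos_ge_0; nra|]. left. apply Rinv_0_lt_compat.
        specialize (Hsin u ltac:(lia)). lra.
      - intros u Hu. destruct (Hth u ltac:(lia)) as [_ Hd]. destruct (Hth (S u) ltac:(lia)) as [_ Hd'].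
        apply wcot_mono; try nra. apply Hmon; lia.
      - intros u. apply Rabs_le. apply SIN_bound. }
    assert (H3: 2 * wcot (d A) <= / dl).
    { destruct (Hth A ltac:(lia)) as [_ Hd]. unfold wcot.
      pose proof (sin_third (d A) ltac:(nra) ltac:(lra)).
      pose proof (COS_bound (d A)).
      assert (0 < d A) by nra.
      apply Rle_trans with (1 / sin (d A)).
      - apply Rmult_le_reg_r with (sin (d A)); [lra|]. field_simplify; lra.
      - apply Rle_trans with (1 / (d A / 3)).
        + apply Rmult_le_reg_r with (sin (d A) * (d A / 3)); [nra|]. field_simplify; lra.
        + apply Rmult_le_reg_r with (d A * dl); [nra|]. field_simplify; nra. }
    eapply Rle_trans; [apply Rabs_triang|]. lra.
Qed.

Definition sC (a n : nat) (F : nat -> C) : C :=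
  fold_right (fun i acc => Cplus (F i) acc) (RtoC 0) (seq a n).

Lemma sumC_sC lo hi F : sumC lo hi F = sC lo (S hi - lo) F.
Proof. reflexivity. Qed.

Lemma sC_S a n F : sC a (S n) F = Cplus (F a) (sC (S a) n F). Proof. reflexivity. Qed.

Lemma fst_sC a n F : fst (sC a n F) = sR a n (fun i => fst (F i)).
Proof. revert a; induction n; intros a; [reflexivity|]. rewrite sC_S, sR_S. simpl. rewrite IHn. reflexivity. Qed.

Lemma snd_sC a n F : snd (sC a n F) = sR a n (fun i => snd (F i)).
Proof. revert a; induction n; intros a; [reflexivity|]. rewrite sC_S, sR_S. simpl. rewrite IHn. reflexivity. Qed.

Lemma sC_mult_r a n F z : Cmult (sC a n F) z = sC a n (fun i => Cmult (F i) z).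
Proof.
  revert a; induction n; intros a.
  - unfold sC; simpl. unfold Cmult, RtoC; simpl. f_equal; ring.
  - rewrite !sC_S, <- IHn. destruct (F a), (sC (S a) n F), z. unfold Cmult, Cplus; simpl. f_equal; ring.
Qed.

Lemma Cmod_le_fs z : Cmod z <= Rabs (fst z) + Rabs (snd z).
Proof.
  unfold Cmod. apply Rsqr_incr_0_var.
  - rewrite Rsqr_sqrt by (apply Rplus_le_le_0_compat; apply pow2_ge_0).
    unfold Rsqr. pose proof (Rabs_pos (fst z)). pose proof (Rabs_pos (snd z)).
    rewrite <- (Rsqr_abs (fst z)) at 1 || idtac.
    replace (fst z ^ 2) with (Rabs (fst z) * Rabs (fst z)) by (rewrite <- Rabs_mult; rewrite Rabs_right; [ring| apply Rle_ge; nra]).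
    replace (snd z ^ 2) with (Rabs (snd z) * Rabs (snd z)) by (rewrite <- Rabs_mult; rewrite Rabs_right; [ring| apply Rle_ge; nra]).
    nra.
  - pose proof (Rabs_pos (fst z)). pose proof (Rabs_pos (snd z)). lra.
Qed.

Lemma Cmod_sq z : Cmod z ^ 2 = fst z ^ 2 + snd z ^ 2.
Proof. unfold Cmod. rewrite pow2_sqrt; [reflexivity|]. apply Rplus_le_le_0_compat; apply pow2_ge_0. Qed.

Definition U (M : nat) (th : R) : C := sC 1 M (fun s => e (INR (s * s) * th)).

Lemma sq_sR a n F : sR a n F ^ 2 = sR a n (fun s => sR a n (fun t => F s * F t)).
Proof. simpl. rewrite Rmult_1_r. apply sR_mult. Qed.

Definition ang (th : R) (s : nat) := 2 * PI * (INR (s * s) * th).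

Lemma U_sq M th : Cmod (U M th) ^ 2 =
  sR 1 M (fun s => sR 1 M (fun t => cos (ang th s - ang th t))).
Proof.
  rewrite Cmod_sq. unfold U. rewrite fst_sC, snd_sC. rewrite !sq_sR. rewrite <- sR_plus.
  apply sR_ext; intros s _. rewrite <- sR_plus. apply sR_ext; intros t _.
  unfold e, ang; simpl. rewrite cos_minus. ring.
Qed.

Lemma sym_split M (c : nat -> nat -> R) : (forall s t, c s t = c t s) ->
  sR 1 M (fun s => sR 1 M (fun t => c s t)) =
  sR 1 M (fun s => c s s) + 2 * sR 1 M (fun s => sR 1 M (fun t => if t <? s then c s t else 0)).
Proof.
  intros Hs.
  rewrite (sR_ext 1 M _ (fun s => sR 1 M (fun t => (if t <? s then c s t else 0) + (if s <? t then c s t else 0)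
      + (if Nat.eqb t s then c s t else 0)))).
  2:{ intros s _. apply sR_ext. intros t _.
      destruct (t <? s) eqn:E1, (s <? t) eqn:E2, (Nat.eqb t s) eqn:E3;
      rewrite ?Nat.ltb_lt, ?Nat.ltb_ge, ?Nat.eqb_eq, ?Nat.eqb_neq in *; try lia; try ring. }
  rewrite (sR_ext 1 M _ (fun s => sR 1 M (fun t => (if t <? s then c s t else 0) + (if s <? t then c s t else 0))
      + c s s)).
  2:{ intros s Hs'. rewrite sR_plus. rewrite sR_delta.
      replace (Nat.leb 1 s && Nat.ltb s (1 + M))%bool with true; [reflexivity|].
      symmetry; apply andb_true_iff; split; [apply Nat.leb_le|apply Nat.ltb_lt]; lia. }
  rewrite sR_plus. rewrite (sR_ext 1 M (fun s => sR 1 M (fun t => (if t <? s then c s t else 0) + (if s <? t then c s t else 0)))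
     (fun s => sR 1 M (fun t => (if t <? s then c s t else 0)) + sR 1 M (fun t => if s <? t then c s t else 0))).
  2:{ intros; apply sR_plus. }
  rewrite sR_plus.
  rewrite (sR_swap 1 M 1 M (fun s t => if s <? t then c s t else 0)).
  rewrite (sR_ext 1 M (fun j => sR 1 M (fun i => if i <? j then c i j else 0))
            (fun s => sR 1 M (fun t => if t <? s then c s t else 0))).
  2:{ intros; apply sR_ext; intros. rewrite Hs. reflexivity. }
  ring.
Qed.

Lemma tri_inner M t (F : nat -> R) : (1 <= t <= M)%nat ->
  sR 1 M (fun s => if t <? s then F s else 0) =
  sR 1 M (fun h => if (t + h <=? M)%nat then F (t + h)%nat else 0).
Proof.
  intros Ht.
  assert (EM: sR 1 M (fun s => if t <? s then F s else 0) = sR 1 (t + (M - t)) (fun s => if t <? s then F s else 0)) by (f_equal; lia).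
  rewrite EM, sR_split. clear EM.
  rewrite (sR_ext 1 t _ (fun _ => 0)).
  2:{ intros s Hs. destruct (t <? s) eqn:E; [apply Nat.ltb_lt in E; lia| reflexivity]. }
  rewrite sR_zero, Rplus_0_l.
  assert (EM: sR 1 M (fun h => if (t + h <=? M)%nat then F (t + h)%nat else 0) = sR 1 ((M - t) + t) (fun h => if (t + h <=? M)%nat then F (t + h)%nat else 0)) by (f_equal; lia).
  rewrite EM, sR_split. clear EM.
  rewrite (sR_ext (1 + (M - t)) t _ (fun _ => 0)).
  2:{ intros h Hh. destruct (t + h <=? M)%nat eqn:E; [apply Nat.leb_le in E; lia| reflexivity]. }
  rewrite sR_zero, Rplus_0_r.
  rewrite (sR_shift 1 t). apply sR_ext. intros h Hh.
  replace (t <? h + t) with true by (symmetry; apply Nat.ltb_lt; lia).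
  replace (t + h <=? M)%nat with true by (symmetry; apply Nat.leb_le; lia).
  f_equal; lia.
Qed.

Lemma tri_reindex M (F : nat -> nat -> R) :
  sR 1 M (fun s => sR 1 M (fun t => if t <? s then F s t else 0)) =
  sR 1 M (fun h => sR 1 M (fun t => if (t + h <=? M)%nat then F (t + h)%nat t else 0)).
Proof.
  rewrite sR_swap. rewrite (sR_swap 1 M 1 M (fun h t => if (t + h <=? M)%nat then F (t + h)%nat t else 0)).
  apply sR_ext. intros t Ht. apply (tri_inner M t (fun s => F s t)). lia.
Qed.

Lemma prefix_ind M K (F : nat -> R) : (K <= M)%nat ->
  sR 1 M (fun t => if (t <=? K)%nat then F t else 0) = sR 1 K F.
Proof.
  intros HK.
  assert (EM: sR 1 M (fun t => if (t <=? K)%nat then F t else 0) = sR 1 (K + (M - K)) (fun t => if (t <=? K)%nat then F t else 0)) by (f_equal; lia).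
  rewrite EM, sR_split. clear EM.
  rewrite (sR_ext (1 + K) (M - K) _ (fun _ => 0)).
  2:{ intros t Ht. destruct (t <=? K)%nat eqn:E; [apply Nat.leb_le in E; lia| reflexivity]. }
  rewrite sR_zero, Rplus_0_r. apply sR_ext. intros t Ht.
  replace (t <=? K)%nat with true by (symmetry; apply Nat.leb_le; lia). reflexivity.
Qed.

Definition Gw (M : nat) (th : R) (x : nat) : R :=
  if Rle_dec (nrm (INR x * th)) 0 then INR M else Rmin (INR M) (/ nrm (INR x * th)).

Lemma Gw_nonneg M th x : 0 <= Gw M th x.
Proof.
  unfold Gw. destruct (Rle_dec _ 0); [apply pos_INR|].
  apply Rmin_glb; [apply pos_INR|]. left; apply Rinv_0_lt_compat. lra.
Qed.

Lemma Gw_le_M M th x : Gw M th x <= INR M.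
Proof. unfold Gw. destruct (Rle_dec _ 0); [lra| apply Rmin_l]. Qed.

Lemma inner_bound M th h : (1 <= h)%nat ->
  Rabs (sR 1 M (fun t => if (t + h <=? M)%nat then cos (ang th (t + h) - ang th t) else 0)) <= Gw M th (2 * h).
Proof.
  intros Hh.
  rewrite (sR_ext 1 M _ (fun t => if (t <=? M - h)%nat then cos ((4 * PI * INR h * th) * INR t + 2 * PI * INR (h * h) * th) else 0)).
  2:{ intros t Ht. destruct (t + h <=? M)%nat eqn:E1, (t <=? M - h)%nat eqn:E2;
      rewrite ?Nat.leb_le, ?Nat.leb_gt in *; try lia; try reflexivity.
      f_equal. unfold ang. rewrite !mult_INR, plus_INR. ring. }
  destruct (le_lt_dec h M).
  - rewrite prefix_ind by lia.
    assert (Htriv: Rabs (sR 1 (M - h) (fun t => cos (4 * PI * INR h * th * INR t + 2 * PI * INR (h * h) * th))) <= INR M).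
    { eapply Rle_trans; [apply sR_abs|]. eapply Rle_trans; [apply sR_le with (G := fun _ => 1); intros; apply Rabs_le; apply COS_bound|].
      rewrite sR_const, Rmult_1_r. apply le_INR; lia. }
    unfold Gw. destruct (Rle_dec (nrm (INR (2 * h) * th)) 0) as [Hn|Hn]; auto.
    apply Rmin_glb; auto.
    pose proof (sin_nrm (INR (2 * h) * th)) as Hs.
    assert (E: 4 * PI * INR h * th / 2 = PI * (INR (2 * h) * th)) by (rewrite mult_INR; simpl; field).
    assert (Hsn: sin (4 * PI * INR h * th / 2) <> 0).
    { rewrite E. intro H0. rewrite H0, Rabs_R0 in Hs. lra. }
    eapply Rle_trans; [apply lin_cos_bound; auto|]. rewrite E.
    apply Rinv_le_contravar; lra.
  - rewrite (sR_ext 1 M _ (fun _ => 0)).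
    + rewrite sR_zero, Rabs_R0. apply Gw_nonneg.
    + intros t Ht. destruct (t <=? M - h)%nat eqn:E; [apply Nat.leb_le in E; lia| reflexivity].
Qed.

Lemma weyl_step1 M th : Cmod (U M th) ^ 2 <= INR M + 2 * sR 1 M (fun h => Gw M th (2 * h)).
Proof.
  rewrite U_sq. rewrite sym_split.
  2:{ intros. unfold ang. rewrite <- cos_neg. f_equal. ring. }
  rewrite (sR_ext 1 M (fun s => cos (ang th s - ang th s)) (fun _ => 1)).
  2:{ intros. rewrite Rminus_diag. apply cos_0. }
  rewrite sR_const, Rmult_1_r. apply Rplus_le_compat_l. apply Rmult_le_compat_l; [lra|].
  rewrite (tri_reindex M (fun s t => cos (ang th s - ang th t))).
  eapply Rle_trans; [apply Rle_abs|]. eapply Rle_trans; [apply sR_abs|].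
  apply sR_le. intros h Hh. apply inner_bound. lia.
Qed.

Lemma even_le M (G : nat -> R) : (forall x, 0 <= G x) ->
  sR 1 M (fun h => G (2 * h)%nat) <= sR 0 (2 * M + 1) G.
Proof.
  intros HG. induction M.
  - rewrite sR_0. simpl. rewrite sR_S, sR_0. specialize (HG 0%nat). lra.
  - rewrite sR_Sr. replace (2 * S M + 1)%nat with (S (S (2 * M + 1))) by lia.
    rewrite !sR_Sr. replace (1 + M)%nat with (S M) by lia.
    replace (0 + (2 * M + 1))%nat with (2 * M + 1)%nat by lia.
    replace (0 + S (2 * M + 1))%nat with (2 * S M)%nat by lia.
    specialize (HG (2 * M + 1)%nat). lra.
Qed.

Lemma sR_mono_len a n m (G : nat -> R) : (forall x, 0 <= G x) -> (n <= m)%nat -> sR a n G <= sR a m G.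
Proof.
  intros HG Hnm. replace m with (n + (m - n))%nat by lia. rewrite sR_split.
  assert (0 <= sR (a + n) (m - n) G) by (apply sR_nonneg; auto). lra.
Qed.

Lemma harm n : sR 1 n (fun i => / INR i) <= 2 * sqrt (INR n).
Proof.
  induction n.
  - rewrite sR_0. simpl. rewrite sqrt_0. lra.
  - rewrite sR_Sr. replace (1 + n)%nat with (S n) by lia.
    rewrite S_INR. set (a := sqrt (INR n)). set (b := sqrt (INR n + 1)).
    assert (Ha: 0 <= a) by apply sqrt_pos. assert (Hb: 0 <= b) by apply sqrt_pos.
    assert (Ea: a * a = INR n) by (apply sqrt_sqrt, pos_INR).
    assert (Eb: b * b = INR n + 1) by (apply sqrt_sqrt; pose proof (pos_INR n); lra).
    assert (Hb1: 1 <= b) by (pose proof (pos_INR n); nra).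
    assert (a <= b) by nra.
    assert (/ (INR n + 1) <= 2 * (b - a)).
    { rewrite <- Eb. assert ((b - a) * (b + a) = 1) by nra.
      apply Rmult_le_reg_r with (b * b); [nra|]. rewrite Rinv_l by nra. nra. }
    change (sqrt (INR n)) with a in IHn. lra.
Qed.

Definition phi1 (M : R) (K : R) (i : nat) : R := if (i <=? 1)%nat then M else K / INR (i - 1).

Lemma phi1_sum M K n : 0 <= M -> 0 <= K ->
  sR 0 n (phi1 M K) <= 2 * M + K * sR 1 n (fun i => / INR i).
Proof.
  intros HM HK.
  assert (H: sR 0 n (phi1 M K) <= INR (Nat.min n 2) * M + K * sR 1 (n - 2) (fun i => / INR i)).
  { induction n.
    - rewrite !sR_0. simpl. lra.
    - rewrite sR_Sr. simpl (0 + n)%nat. unfold phi1 at 2. destruct (n <=? 1)%nat eqn:E.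
      + apply Nat.leb_le in E. replace (S n - 2)%nat with 0%nat by lia. replace (n - 2)%nat with 0%nat in IHn by lia.
        rewrite sR_0 in *. destruct n as [|[|]]; simpl in *; try lia; lra.
      + apply Nat.leb_gt in E. replace (Nat.min (S n) 2) with 2%nat by lia. replace (Nat.min n 2) with 2%nat in IHn by lia.
        replace (S n - 2)%nat with (S (n - 2)) by lia. rewrite sR_Sr. replace (1 + (n - 2))%nat with (n - 1)%nat by lia.
        assert (0 < INR (n - 1)) by (apply lt_0_INR; lia).
        unfold Rdiv. lra. }
  eapply Rle_trans; [apply H|].
  assert (INR (Nat.min n 2) <= 2) by (replace 2 with (INR 2) by reflexivity; apply le_INR; lia).
  assert (sR 1 (n - 2) (fun i => / INR i) <= sR 1 n (fun i => / INR i)).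
  { apply sR_mono_len; [|lia]. intros x. destruct x; [simpl; rewrite Rinv_0; lra|]. left; apply Rinv_0_lt_compat, lt_0_INR; lia. }
  nra.
Qed.

Lemma modinj q a c y1 y2 : Nat.gcd a q = 1%nat -> (y1 < q)%nat -> (y2 < q)%nat ->
  ((c + y1 * a) mod q = (c + y2 * a) mod q)%nat -> y1 = y2.
Proof.
  intros Hg H1 H2 Hm.
  assert (Hq: (q <> 0)%nat) by lia.
  assert (gen: forall y1 y2, (y1 < y2)%nat -> (y2 < q)%nat -> ((c + y1 * a) mod q = (c + y2 * a) mod q)%nat -> False).
  { clear y1 y2 H1 H2 Hm. intros y1 y2 Hlt Hy2 Hm.
    pose proof (Nat.div_mod (c + y1 * a) q Hq) as E1.
    pose proof (Nat.div_mod (c + y2 * a) q Hq) as E2.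
    set (w1 := ((c + y1 * a) / q)%nat) in *. set (w2 := ((c + y2 * a) / q)%nat) in *.
    assert (Hd: Nat.divide q (a * (y2 - y1))).
    { exists (w2 - w1)%nat. rewrite Nat.mul_sub_distr_r, Nat.mul_sub_distr_l.
      assert (y1 * a <= y2 * a)%nat by (apply Nat.mul_le_mono_r; lia).
      rewrite (Nat.mul_comm a y2), (Nat.mul_comm a y1), (Nat.mul_comm w2 q), (Nat.mul_comm w1 q). lia. }
    apply Nat.gauss in Hd; [|rewrite Nat.gcd_comm; auto].
    apply Nat.divide_pos_le in Hd; lia. }
  destruct (Nat.lt_total y1 y2) as [Hl|[He|Hl]]; auto.
  - exfalso; apply (gen y1 y2); auto.
  - exfalso; apply (gen y2 y1); auto.
Qed.

Lemma nrm_frac (q a c y : nat) (gam : R) : (1 <= q)%nat ->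
  INR c <= INR q * gam < INR c + 1 ->
  INR (Nat.min ((c + y * a) mod q) (q - 1 - (c + y * a) mod q)) / INR q <= nrm (gam + INR y * INR a / INR q).
Proof.
  intros Hq [Hc1 Hc2].
  assert (Hqr: 0 < INR q) by (apply lt_0_INR; lia).
  destruct (nrm_attained (gam + INR y * INR a / INR q)) as [n Hn]. rewrite Hn.
  set (m := ((c + y * a) mod q)%nat). set (w := ((c + y * a) / q)%nat).
  pose proof (Nat.div_mod (c + y * a) q ltac:(lia)) as E. fold w m in E.
  assert (Hm: (m < q)%nat) by (apply Nat.mod_upper_bound; lia).
  assert (ER: INR c + INR y * INR a = INR q * INR w + INR m) by (rewrite <- mult_INR, <- plus_INR, <- mult_INR, <- plus_INR; f_equal; lia).
  set (rho := INR q * gam - INR c).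
  set (t := (Z.of_nat w - n)%Z).
  assert (EQ: INR q * (gam + INR y * INR a / INR q - IZR n) = rho + INR m + INR q * IZR t).
  { unfold rho, t. rewrite minus_IZR, <- INR_IZR_INZ. field_simplify; [|lra]. 
    apply Rmult_eq_reg_r with (INR q); [|lra]. field_simplify; try lra. nra. }
  apply Rmult_le_reg_l with (INR q); auto.
  replace (INR q * (INR (Nat.min m (q - 1 - m)) / INR q)) with (INR (Nat.min m (q - 1 - m))) by (field; lra).
  replace (INR q * Rabs (gam + INR y * INR a / INR q - IZR n)) with (Rabs (INR q * (gam + INR y * INR a / INR q - IZR n))) by (rewrite Rabs_mult, (Rabs_right (INR q)); lra).
  rewrite EQ.
  assert (Hrho: 0 <= rho < 1) by (unfold rho; lra).
  destruct (Z_le_gt_dec 0 t).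
  - assert (0 <= IZR t) by (apply IZR_le; lia).
    rewrite Rabs_right by (apply Rle_ge; pose proof (pos_INR m); nra).
    assert (INR (Nat.min m (q - 1 - m)) <= INR m) by (apply le_INR; lia). nra.
  - assert (IZR t <= -1) by (apply IZR_le; lia).
    assert (INR m + 1 <= INR q) by (rewrite <- S_INR; apply le_INR; lia).
    rewrite Rabs_left by nra.
    assert (INR (Nat.min m (q - 1 - m)) <= INR q - 1 - INR m).
    { replace (INR q - 1 - INR m) with (INR (q - 1 - m)) by (rewrite !minus_INR by lia; simpl; ring).
      apply le_INR; lia. }
    nra.
Qed.

Lemma phi1_nonneg M K i : 0 <= M -> 0 <= K -> 0 <= phi1 M K i.
Proof.
  intros. unfold phi1. destruct (i <=? 1)%nat; auto.
  destruct (Nat.eq_dec (i-1) 0) as [E|E]; [rewrite E; simpl; unfold Rdiv; rewrite Rinv_0; lra|].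
  apply Rdiv_le_0_compat; auto. apply lt_0_INR; lia.
Qed.

Lemma block_bound (M q a Q b : nat) (th be : R) :
  (1 <= q <= Q)%nat -> Nat.gcd a q = 1%nat -> 0 <= th ->
  th = INR a / INR q + be -> Rabs be <= / (INR q * INR Q) ->
  sR 0 q (fun y => Gw M th (b * q + y)%nat) <= 4 * INR M + 4 * INR q * sqrt (INR q).
Proof.
  intros Hq Hg Hth Eth Hbe.
  assert (Hqr: 0 < INR q) by (apply lt_0_INR; lia).
  assert (HQr: INR q <= INR Q) by (apply le_INR; lia).
  set (gam := INR (b * q) * th).
  assert (Hg0: 0 <= INR q * gam) by (unfold gam; apply Rmult_le_pos; [lra| apply Rmult_le_pos; auto; apply pos_INR]).
  set (c := Z.to_nat (up (INR q * gam) - 1)).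
  assert (Hc: INR c <= INR q * gam < INR c + 1).
  { pose proof (fl_spec (INR q * gam)). unfold fl in H. destruct (archimed (INR q * gam)).
    assert (0 < up (INR q * gam))%Z by (apply lt_IZR; simpl; lra).
    unfold c. rewrite INR_IZR_INZ, Z2Nat.id by lia. rewrite minus_IZR. simpl. lra. }
  set (m := fun y => ((c + y * a) mod q)%nat).
  assert (Hm: forall y, (m y < q)%nat) by (intros; apply Nat.mod_upper_bound; lia).
  assert (Hpt: forall y, (y < q)%nat ->
     Gw M th (b * q + y) <= phi1 (INR M) (INR q) (m y) + phi1 (INR M) (INR q) (q - 1 - m y)).
  { intros y Hy.
    pose proof (nrm_frac q a c y gam ltac:(lia) Hc) as Hf. fold (m y) in Hf.
    assert (Hxy: nrm (gam + INR y * INR a / INR q) - / INR q <= nrm (INR (b * q + y) * th)).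
    { pose proof (nrm_lip (INR (b * q + y) * th) (gam + INR y * INR a / INR q)).
      assert (Rabs (INR (b * q + y) * th - (gam + INR y * INR a / INR q)) <= / INR q).
      { replace (INR (b * q + y) * th - (gam + INR y * INR a / INR q)) with (INR y * be)
          by (unfold gam; rewrite Eth, plus_INR; field; lra).
        rewrite Rabs_mult, Rabs_right by (apply Rle_ge, pos_INR).
        assert (INR y <= INR Q) by (apply le_INR; lia).
        apply Rle_trans with (INR Q * / (INR q * INR Q)).
        - apply Rmult_le_compat; auto; try apply pos_INR; apply Rabs_pos.
        - right. field. lra. }
      lra. }
    pose proof (phi1_nonneg (INR M) (INR q) (m y) (pos_INR M) (pos_INR q)).
    pose proof (phi1_nonneg (INR M) (INR q) (q - 1 - m y) (pos_INR M) (pos_INR q)).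
    pose proof (Gw_le_M M th (b * q + y)).
    set (mu := Nat.min (m y) (q - 1 - m y)) in *.
    destruct (le_lt_dec mu 1) as [Hmu|Hmu].
    - assert (phi1 (INR M) (INR q) (m y) = INR M \/ phi1 (INR M) (INR q) (q - 1 - m y) = INR M).
      { unfold phi1. destruct (Nat.le_gt_cases (m y) (q - 1 - m y)).
        - left. replace (m y <=? 1)%nat with true; auto. symmetry; apply Nat.leb_le; lia.
        - right. replace (q - 1 - m y <=? 1)%nat with true; auto. symmetry; apply Nat.leb_le; lia. }
      destruct H2; lra.
    - assert (HmuR: 2 <= INR mu) by (replace 2 with (INR 2) by reflexivity; apply le_INR; lia).
      assert (Hpos: (INR mu - 1) / INR q <= nrm (INR (b * q + y) * th)).
      { replace ((INR mu - 1) / INR q) with (INR mu / INR q - / INR q) by (field; lra). lra. }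
      assert (Hpos2: 0 < (INR mu - 1) / INR q) by (apply Rdiv_lt_0_compat; lra).
      assert (HG: Gw M th (b * q + y) <= INR q / (INR mu - 1)).
      { unfold Gw. destruct (Rle_dec (nrm (INR (b * q + y) * th)) 0) as [Hn|Hn]; [lra|].
        eapply Rle_trans; [apply Rmin_r|].
        replace (INR q / (INR mu - 1)) with (/ ((INR mu - 1) / INR q)) by (field; lra).
        apply Rinv_le_contravar; lra. }
      assert (INR q / (INR mu - 1) = phi1 (INR M) (INR q) (m y) \/ INR q / (INR mu - 1) = phi1 (INR M) (INR q) (q - 1 - m y)).
      { unfold phi1, mu in *. destruct (Nat.le_gt_cases (m y) (q - 1 - m y)).
        - left. rewrite Nat.min_l in * by lia. replace (m y <=? 1)%nat with false by (symmetry; apply Nat.leb_gt; lia).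
          rewrite minus_INR by lia. reflexivity.
        - right. rewrite Nat.min_r in * by lia. replace (q - 1 - m y <=? 1)%nat with false by (symmetry; apply Nat.leb_gt; lia).
          rewrite (minus_INR (q - 1 - m y) 1) by lia. reflexivity. }
      destruct H2; lra. }
  eapply Rle_trans; [apply sR_le with (G := fun y => phi1 (INR M) (INR q) (m y) + phi1 (INR M) (INR q) (q - 1 - m y)); intros; apply Hpt; lia|].
  rewrite sR_plus.
  rewrite (sR_reindex 0 q m (phi1 (INR M) (INR q))).
  2:{ intros; auto. }
  2:{ intros y1 y2 H1 H2 He. apply (modinj q a c y1 y2); auto; lia. }
  rewrite (sR_reindex 0 q (fun y => q - 1 - m y)%nat (phi1 (INR M) (INR q))).
  2:{ intros; lia. }
  2:{ intros y1 y2 H1 H2 He. assert (m y1 = m y2) by (pose proof (Hm y1); pose proof (Hm y2); lia).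
      apply (modinj q a c y1 y2); auto; lia. }
  pose proof (phi1_sum (INR M) (INR q) q (pos_INR M) (pos_INR q)).
  pose proof (harm q).
  assert (INR q * sR 1 q (fun i => / INR i) <= INR q * (2 * sqrt (INR q))) by (apply Rmult_le_compat_l; lra).
  lra.
Qed.

Lemma weyl (M q a Q : nat) (th be : R) :
  (1 <= q <= Q)%nat -> Nat.gcd a q = 1%nat -> 0 <= th ->
  th = INR a / INR q + be -> Rabs be <= / (INR q * INR Q) ->
  Cmod (U M th) ^ 2 <= INR M + 2 * (2 * INR M / INR q + 1) * (4 * INR M + 4 * INR q * sqrt (INR q)).
Proof.
  intros Hq Hg Hth Eth Hbe.
  assert (Hqr: 0 < INR q) by (apply lt_0_INR; lia).
  eapply Rle_trans; [apply weyl_step1|]. apply Rplus_le_compat_l. rewrite Rmult_assoc. apply Rmult_le_compat_l; [lra|].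
  set (nb := ((2 * M) / q + 1)%nat).
  assert (Hnb: (2 * M + 1 <= q * nb)%nat).
  { unfold nb. pose proof (Nat.div_mod (2 * M) q ltac:(lia)). pose proof (Nat.mod_upper_bound (2 * M) q ltac:(lia)). nia. }
  eapply Rle_trans; [apply even_le; apply Gw_nonneg|].
  eapply Rle_trans; [apply sR_mono_len; [apply Gw_nonneg| exact Hnb]|].
  rewrite sR_blocks.
  eapply Rle_trans; [apply sR_le with (G := fun _ => 4 * INR M + 4 * INR q * sqrt (INR q)); intros b _; eapply block_bound; eauto|].
  rewrite sR_const.
  assert (Hsq: 0 <= sqrt (INR q)) by apply sqrt_pos.
  assert (0 <= 4 * INR M + 4 * INR q * sqrt (INR q)) by (pose proof (pos_INR M); nra).
  apply Rmult_le_compat_r; auto.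
  unfold nb. rewrite plus_INR. simpl (INR 1). apply Rplus_le_compat_r.
  apply Rmult_le_reg_l with (INR q); auto. rewrite <- mult_INR.
  replace (INR q * (2 * INR M / INR q)) with (INR (2 * M)) by (rewrite mult_INR; simpl; field; lra).
  apply le_INR. apply Nat.Div0.mul_div_le.
Qed.

Lemma class_bound (q y M s0 Q nb : nat) (psi be : R) (a : Z) :
  (1 <= q)%nat -> (1 <= s0)%nat -> (4 * M + 2 * q <= Q)%nat -> 0 < be -> be <= / (INR q * INR Q) ->
  Rabs (sR 0 nb (fun b => if ((s0 <=? b * q + y) && (b * q + y <=? M))%nat
        then cos (2 * PI * (INR ((b * q + y) * (b * q + y)) * (IZR a / INR q + be)) + psi) else 0))
  <= 1 + / (2 * be * INR q * INR s0).
Proof.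
  intros Hq Hs0 HQ Hbe Hbe2.
  assert (Hqr: 0 < INR q) by (apply lt_0_INR; lia).
  assert (HQr: 0 < INR Q) by (apply lt_0_INR; lia).
  assert (Hs0r: 1 <= INR s0) by (replace 1 with (INR 1) by reflexivity; apply le_INR; lia).
  destruct (sR_interval nb (fun b => ((s0 <=? b * q + y) && (b * q + y <=? M))%nat)
     (fun b => cos (2 * PI * (INR ((b * q + y) * (b * q + y)) * (IZR a / INR q + be)) + psi))) as [A [len [E [Hin _]]]].
  { intros u v w Hu Hw Huvw. apply andb_true_iff in Hu as [Hu1 Hu2]. apply andb_true_iff in Hw as [Hw1 Hw2].
    apply Nat.leb_le in Hu1, Hu2, Hw1, Hw2. apply andb_true_iff; split; apply Nat.leb_le; nia. }
  rewrite E.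
  set (th := fun b : nat => 2 * PI * (INR (y * y) * IZR a / INR q) + psi + 2 * PI * be * INR ((b * q + y) * (b * q + y))).
  set (d := fun b : nat => PI * be * INR q * (2 * INR (b * q + y) + INR q)).
  rewrite (sR_ext A len _ (fun b => cos (th b))).
  2:{ intros b _. unfold th.
      replace (2 * PI * (INR ((b * q + y) * (b * q + y)) * (IZR a / INR q + be)) + psi)
        with (2 * PI * (INR (y * y) * IZR a / INR q) + psi + 2 * PI * be * INR ((b * q + y) * (b * q + y))
              + 2 * IZR (a * Z.of_nat (b * b * q + 2 * b * y)) * PI).
      - apply cos_periodZ.
      - rewrite mult_IZR, <- INR_IZR_INZ. rewrite !mult_INR, !plus_INR, !mult_INR. simpl (INR 2). field. lra. }
  apply (KL A len th d (2 * be * INR q * INR s0)).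
  - apply Rmult_lt_0_compat; [|lra]. apply Rmult_lt_0_compat; lra.
  - intros b Hb. specialize (Hin b Hb). apply andb_true_iff in Hin as [H1 H2]. apply Nat.leb_le in H1, H2.
    split.
    + unfold th, d. rewrite !mult_INR, !plus_INR, !mult_INR, S_INR. ring.
    + assert (HbR1: INR s0 <= INR (b * q + y)) by (apply le_INR; lia).
      assert (HbR2: INR (b * q + y) <= INR M) by (apply le_INR; lia).
      assert (HMQ: 4 * INR M + 2 * INR q <= INR Q).
      { replace (4 * INR M + 2 * INR q) with (INR (4 * M + 2 * q)) by (rewrite plus_INR, !mult_INR; simpl; ring). apply le_INR; lia. }
      pose proof PI_gt3. unfold d. split.
      * assert (0 < PI * be * INR q) by (apply Rmult_lt_0_compat; [apply Rmult_lt_0_compat|]; lra).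
        assert (2 * INR s0 <= 2 * INR (b * q + y) + INR q) by lra.
        replace (PI * (2 * be * INR q * INR s0)) with ((PI * be * INR q) * (2 * INR s0)) by ring. nra.
      * assert (be * INR q * INR Q <= 1).
        { apply Rmult_le_compat_r with (r := INR q * INR Q) in Hbe2; [|nra]. rewrite Rinv_l in Hbe2 by nra. nra. }
        assert (be * INR q * (2 * INR (b * q + y) + INR q) <= 1/2).
        { apply Rle_trans with (be * INR q * (INR Q / 2)).
          - apply Rmult_le_compat_l; [nra| lra].
          - nra. }
        replace (PI * be * INR q * (2 * INR (b * q + y) + INR q)) with (PI * (be * INR q * (2 * INR (b * q + y) + INR q))) by ring.
        nra.
  - intros b Hb1 Hb2. unfold d. rewrite !plus_INR, !mult_INR, S_INR.
    assert (0 <= PI * be * INR q) by (pose proof PI_gt3; apply Rmult_le_pos; [apply Rmult_le_pos|]; lra). nra.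
Qed.

Lemma high_bound (q M s0 Q : nat) (psi be : R) (a : Z) :
  (1 <= q)%nat -> (1 <= s0)%nat -> (4 * M + 2 * q <= Q)%nat -> 0 < be -> be <= / (INR q * INR Q) ->
  Rabs (sR 1 M (fun s => if (s0 <=? s)%nat then cos (2 * PI * (INR (s * s) * (IZR a / INR q + be)) + psi) else 0))
  <= INR q + / (2 * be * INR s0).
Proof.
  intros Hq Hs0 HQ Hbe Hbe2.
  assert (Hqr: 0 < INR q) by (apply lt_0_INR; lia).
  set (F := fun s => if ((s0 <=? s) && (s <=? M))%nat then cos (2 * PI * (INR (s * s) * (IZR a / INR q + be)) + psi) else 0).
  set (nb := (M / q + 1)%nat).
  assert (Hnb: (M + 1 <= q * nb)%nat).
  { unfold nb. pose proof (Nat.div_mod M q ltac:(lia)). pose proof (Nat.mod_upper_bound M q ltac:(lia)). nia. }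
  assert (E: sR 1 M (fun s => if (s0 <=? s)%nat then cos (2 * PI * (INR (s * s) * (IZR a / INR q + be)) + psi) else 0)
     = sR 0 (q * nb) F).
  { assert (EM: sR 0 (q * nb) F = sR 0 (1 + M + (q * nb - (1 + M))) F) by (f_equal; lia).
    rewrite EM, !sR_split. rewrite (sR_ext (0 + (1 + M)) _ F (fun _ => 0)).
    2:{ intros s Hs. unfold F. replace (s <=? M)%nat with false by (symmetry; apply Nat.leb_gt; lia).
        rewrite andb_false_r. reflexivity. }
    rewrite sR_zero, Rplus_0_r. rewrite sR_S, sR_0.
    assert (F0: F 0%nat = 0) by (unfold F; replace (s0 <=? 0)%nat with false by (symmetry; apply Nat.leb_gt; lia); reflexivity).
    rewrite F0. match goal with |- _ = ?z + ?w => transitivity w; [|lra] end. simpl (0 + 1)%nat. apply sR_ext. intros s Hs. unfold F.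
    replace (s <=? M)%nat with true by (symmetry; apply Nat.leb_le; lia). rewrite andb_true_r. reflexivity. }
  rewrite E, sR_blocks, sR_swap.
  eapply Rle_trans; [apply sR_abs|].
  eapply Rle_trans; [apply sR_le with (G := fun _ => 1 + / (2 * be * INR q * INR s0))|].
  - intros y _. unfold F. apply (class_bound q y M s0 Q nb psi be a); auto.
  - rewrite sR_const. right. field. split; [|split]; try lra.
    assert (1 <= INR s0) by (replace 1 with (INR 1) by reflexivity; apply le_INR; lia). lra.
Qed.

Lemma low_bound (M s0 : nat) (F : nat -> R) : (forall s, Rabs (F s) <= 1) ->
  Rabs (sR 1 M (fun s => if (s0 <=? s)%nat then 0 else F s)) <= INR s0 - 1 \/ s0 = 0%nat.
Proof.
  intros HF. destruct s0 as [|s0]; [right; reflexivity|left].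
  eapply Rle_trans; [apply sR_abs|].
  eapply Rle_trans; [apply sR_le with (G := fun s => if (s <=? s0)%nat then 1 else 0)|].
  - intros s _. destruct (S s0 <=? s)%nat eqn:E1, (s <=? s0)%nat eqn:E2;
    rewrite ?Nat.leb_le, ?Nat.leb_gt in *; try lia; rewrite ?Rabs_R0; auto; lra.
  - rewrite S_INR. replace (INR s0 + 1 - 1) with (INR s0) by ring.
    destruct (le_lt_dec s0 M).
    + rewrite prefix_ind by lia. rewrite sR_const. lra.
    + rewrite (sR_ext 1 M _ (fun _ => 1)).
      * rewrite sR_const. apply Rle_trans with (INR M * 1); [lra|]. rewrite Rmult_1_r. apply le_INR; lia.
      * intros s Hs. replace (s <=? s0)%nat with true by (symmetry; apply Nat.leb_le; lia). reflexivity.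
Qed.

Lemma cos_sum_bound (q M s0 Q : nat) (psi be : R) (a : Z) :
  (1 <= q)%nat -> (1 <= s0)%nat -> (4 * M + 2 * q <= Q)%nat -> 0 < be -> be <= / (INR q * INR Q) ->
  Rabs (sR 1 M (fun s => cos (2 * PI * (INR (s * s) * (IZR a / INR q + be)) + psi)))
  <= INR s0 - 1 + INR q + / (2 * be * INR s0).
Proof.
  intros. set (F := fun s => cos (2 * PI * (INR (s * s) * (IZR a / INR q + be)) + psi)).
  rewrite (sR_ext 1 M F (fun s => (if (s0 <=? s)%nat then 0 else F s) + (if (s0 <=? s)%nat then F s else 0))).
  2:{ intros. destruct (s0 <=? i)%nat; ring. }
  rewrite sR_plus. eapply Rle_trans; [apply Rabs_triang|].
  destruct (low_bound M s0 F) as [H4|H4]; [intros; apply Rabs_le, COS_bound| |lia].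
  pose proof (high_bound q M s0 Q psi be a H H0 H1 H2 H3). unfold F in *. lra.
Qed.

Lemma major_pos (M q Q : nat) (a : Z) (th be : R) :
  (1 <= q)%nat -> (4 * M + 2 * q <= Q)%nat -> th = IZR a / INR q + be -> 0 < be -> be <= / (INR q * INR Q) ->
  Cmod (U M th) <= 3 / sqrt be + 2 * INR q.
Proof.
  intros Hq HQ Eth Hbe Hbe2.
  set (x := / sqrt be).
  assert (Hsb: 0 < sqrt be) by (apply sqrt_lt_R0; auto).
  assert (Hx: 0 < x) by (apply Rinv_0_lt_compat; auto).
  assert (Hbx: be * x * x = 1) by (unfold x; rewrite <- (sqrt_sqrt be) at 1 by lra; field; lra).
  destruct (archimed x) as [Hu1 Hu2].
  assert (Hup: (0 < up x)%Z) by (apply lt_IZR; simpl; lra).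
  set (s0 := Z.to_nat (up x)).
  assert (Hs0: INR s0 = IZR (up x)) by (unfold s0; rewrite INR_IZR_INZ, Z2Nat.id by lia; reflexivity).
  assert (Hs01: (1 <= s0)%nat) by (unfold s0; lia).
  eapply Rle_trans; [apply Cmod_le_fs|].
  unfold U. rewrite fst_sC, snd_sC. unfold e; simpl fst; simpl snd.
  rewrite (sR_ext 1 M (fun i => cos (2 * PI * (INR (i * i) * th))) (fun s => cos (2 * PI * (INR (s * s) * (IZR a / INR q + be)) + 0))).
  2:{ intros. rewrite Eth, Rplus_0_r. reflexivity. }
  rewrite (sR_ext 1 M (fun i => sin (2 * PI * (INR (i * i) * th))) (fun s => cos (2 * PI * (INR (s * s) * (IZR a / INR q + be)) + - (PI / 2)))).
  2:{ intros. rewrite Eth. rewrite <- cos_neg, <- cos_shift. f_equal. ring. }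
  pose proof (cos_sum_bound q M s0 Q 0 be a Hq Hs01 HQ Hbe Hbe2).
  pose proof (cos_sum_bound q M s0 Q (- (PI / 2)) be a Hq Hs01 HQ Hbe Hbe2).
  assert (/ (2 * be * INR s0) <= x / 2).
  { assert (x <= INR s0) by lra.
    apply Rmult_le_reg_r with (2 * be * INR s0); [nra|]. rewrite Rinv_l by nra. nra. }
  assert (INR s0 - 1 <= x) by lra.
  unfold Rdiv. replace (3 * / sqrt be) with (3 * x) by reflexivity. lra.
Qed.

Lemma U_neg M th : Cmod (U M (- th)) = Cmod (U M th).
Proof.
  unfold Cmod, U. rewrite !fst_sC, !snd_sC. unfold e; simpl fst; simpl snd.
  rewrite (sR_ext 1 M (fun i => cos (2 * PI * (INR (i * i) * - th))) (fun i => cos (2 * PI * (INR (i * i) * th)))).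
  2:{ intros. rewrite <- cos_neg. f_equal. ring. }
  rewrite (sR_ext 1 M (fun i => sin (2 * PI * (INR (i * i) * - th))) (fun i => - sin (2 * PI * (INR (i * i) * th)))).
  2:{ intros. rewrite <- sin_neg. f_equal. ring. }
  rewrite sR_opp. f_equal. ring.
Qed.

Lemma major (M q Q : nat) (a : Z) (th be : R) :
  (1 <= q)%nat -> (4 * M + 2 * q <= Q)%nat -> th = IZR a / INR q + be -> be <> 0 -> Rabs be <= / (INR q * INR Q) ->
  Cmod (U M th) <= 3 / sqrt (Rabs be) + 2 * INR q.
Proof.
  intros Hq HQ Eth Hbe Hbe2.
  destruct (Rle_dec 0 be).
  - rewrite Rabs_right in * by lra. apply (major_pos M q Q a); auto. lra.
  - rewrite Rabs_left in * by lra. rewrite <- U_neg. apply (major_pos M q Q (- a)); auto; try lra.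
    rewrite Eth, opp_IZR. field. apply not_0_INR; lia.
Qed.

Lemma ind_S_sum n Mx : (1 <= n)%nat -> (Nat.sqrt n <= Mx)%nat ->
  ind_S n = sR 1 Mx (fun s => if Nat.eqb (s * s) n then 1 else 0).
Proof.
  intros Hn HM. unfold ind_S.
  destruct (Nat.eqb (Nat.sqrt n * Nat.sqrt n) n) eqn:E.
  - apply Nat.eqb_eq in E. set (s0 := Nat.sqrt n) in *.
    rewrite (sR_ext 1 Mx _ (fun s => if Nat.eqb s s0 then 1 else 0)).
    + rewrite sR_delta. replace (Nat.leb 1 s0 && Nat.ltb s0 (1 + Mx))%bool with true; auto.
      symmetry. apply andb_true_iff. split.
      * apply Nat.leb_le. assert (s0 <> 0)%nat by (intro Hz; rewrite Hz in E; simpl in E; lia). lia.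
      * apply Nat.ltb_lt. lia.
    + intros s _. destruct (Nat.eqb (s * s) n) eqn:E1, (Nat.eqb s s0) eqn:E2; auto;
      rewrite ?Nat.eqb_eq, ?Nat.eqb_neq in *; [|rewrite E2 in E1; lia].
      exfalso; apply E2. rewrite <- E in E1. destruct (Nat.lt_total s s0) as [H|[H|H]]; auto; nia.
  - rewrite (sR_ext 1 Mx _ (fun _ => 0)); [rewrite sR_zero; reflexivity|].
    intros s _. destruct (Nat.eqb (s * s) n) eqn:E1; auto. apply Nat.eqb_eq in E1.
    rewrite <- E1, Nat.sqrt_square in E. rewrite Nat.eqb_refl in E. discriminate.
Qed.

Lemma ext_in N f m : (1 <= m <= N)%nat -> ext N f (Z.of_nat m) = f m.
Proof.
  intros H. unfold ext. replace ((1 <=? Z.of_nat m)%Z && (Z.of_nat m <=? Z.of_nat N)%Z)%bool with true.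
  - rewrite Nat2Z.id. reflexivity.
  - symmetry. apply andb_true_iff; split; apply Z.leb_le; lia.
Qed.

Lemma ext_delta N g n m : ext N g (Z.of_nat n - Z.of_nat m) = sR 1 N (fun l => if Nat.eqb (m + l) n then g l else 0).
Proof.
  destruct (le_lt_dec n m) as [Hnm|Hnm].
  - rewrite (sR_ext 1 N _ (fun _ => 0)).
    + rewrite sR_zero. unfold ext. replace ((1 <=? Z.of_nat n - Z.of_nat m)%Z) with false by (symmetry; apply Z.leb_gt; lia). reflexivity.
    + intros l Hl. replace (Nat.eqb (m + l) n) with false by (symmetry; apply Nat.eqb_neq; lia). reflexivity.
  - rewrite (sR_ext 1 N _ (fun l => if Nat.eqb l (n - m) then g l else 0)).
    + rewrite sR_delta. unfold ext. replace (Z.of_nat n - Z.of_nat m)%Z with (Z.of_nat (n - m)) by lia.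
      rewrite Nat2Z.id.
      destruct (Nat.leb 1 (n - m) && Nat.ltb (n - m) (1 + N))%bool eqn:E1;
      destruct ((1 <=? Z.of_nat (n - m))%Z && (Z.of_nat (n - m) <=? Z.of_nat N)%Z)%bool eqn:E2; auto;
      rewrite ?andb_true_iff, ?andb_false_iff, ?Nat.leb_le, ?Nat.ltb_lt, ?Z.leb_le, ?Nat.leb_gt, ?Nat.ltb_ge, ?Z.leb_gt in *; lia.
    + intros l Hl. destruct (Nat.eqb (m + l) n) eqn:E1, (Nat.eqb l (n - m)) eqn:E2; auto;
      rewrite ?Nat.eqb_eq, ?Nat.eqb_neq in *; lia.
Qed.

Lemma T_identity N Mx f g : Mx = Nat.sqrt (2 * N) ->
  sumR 1 (2 * N) (fun n => conv N f g (Z.of_nat n) * ind_S n) =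
  sR 1 N (fun m => sR 1 N (fun l => f m * g l * sR 1 Mx (fun s => if Nat.eqb (s * s) (m + l) then 1 else 0))).
Proof.
  intros HM. rewrite sumR_sR. replace (S (2 * N) - 1)%nat with (2 * N)%nat by lia.
  rewrite (sR_ext 1 (2 * N) _ (fun n => sR 1 N (fun m => sR 1 N (fun l => f m * g l * (if Nat.eqb (m + l) n then ind_S n else 0))))).
  2:{ intros n Hn. unfold conv. rewrite sumR_sR. replace (S N - 1)%nat with N by lia.
      rewrite <- sR_scal_r. apply sR_ext. intros m Hm. rewrite ext_in by lia. rewrite ext_delta.
      rewrite <- sR_scal, <- sR_scal_r. apply sR_ext. intros l Hl. destruct (Nat.eqb (m + l) n); ring. }
  rewrite sR_swap. apply sR_ext. intros m Hm. rewrite sR_swap. apply sR_ext. intros l Hl.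
  rewrite (sR_ext 1 (2 * N) _ (fun n => f m * g l * (if Nat.eqb n (m + l) then ind_S n else 0))).
  2:{ intros n _. rewrite Nat.eqb_sym. reflexivity. }
  rewrite sR_scal. rewrite sR_delta.
  replace (Nat.leb 1 (m + l) && Nat.ltb (m + l) (1 + 2 * N))%bool with true.
  - rewrite (ind_S_sum (m + l) Mx); [reflexivity|lia|]. rewrite HM. apply Nat.sqrt_le_mono. lia.
  - symmetry; apply andb_true_iff; split; [apply Nat.leb_le| apply Nat.ltb_lt]; lia.
Qed.

Lemma sC_ext a n F G : (forall i, (a <= i < a + n)%nat -> F i = G i) -> sC a n F = sC a n G.
Proof.
  revert a; induction n; intros a H; [reflexivity|].
  rewrite !sC_S. rewrite H by lia. rewrite (IHn (S a)); [reflexivity|]. intros; apply H; lia.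
Qed.

Lemma sC_mult_l a n F z : Cmult z (sC a n F) = sC a n (fun i => Cmult z (F i)).
Proof.
  revert a; induction n; intros a.
  - unfold sC; simpl. unfold Cmult, RtoC; simpl. f_equal; ring.
  - rewrite !sC_S, <- IHn. destruct (F a), (sC (S a) n F), z. unfold Cmult, Cplus; simpl. f_equal; ring.
Qed.

Lemma fhat_sC N f th : fhat N f th = sC 1 N (fun n => Cmult (RtoC (f n)) (e (- INR n * th))).
Proof. unfold fhat. rewrite sumC_sC. f_equal. lia. Qed.

Lemma prod_fst N M f g th :
  fst (Cmult (Cmult (fhat N f th) (fhat N g th)) (U M th)) =
  sR 1 N (fun m => sR 1 N (fun l => sR 1 M (fun s =>
     f m * g l * cos (2 * PI * ((INR (s * s) - INR m - INR l) * th))))).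
Proof.
  rewrite !fhat_sC. rewrite sC_mult_r, sC_mult_r, fst_sC. apply sR_ext. intros m _.
  rewrite sC_mult_l, sC_mult_r, fst_sC. apply sR_ext. intros l _.
  unfold U. rewrite sC_mult_l, fst_sC. apply sR_ext. intros s _.
  unfold e, Cmult, RtoC; simpl.
  replace (2 * PI * ((INR (s * s) - INR m - INR l) * th)) with
    ((2 * PI * (- INR m * th) + 2 * PI * (- INR l * th)) + 2 * PI * (INR (s * s) * th)) by ring.
  rewrite cos_plus, cos_plus, sin_plus. ring.
Qed.

Lemma fourier N f g (P : nat) : (1 <= N)%nat -> P = (2 * N)%nat ->
  sR 0 P (fun j => fst (Cmult (Cmult (fhat N f (INR j / INR P)) (fhat N g (INR j / INR P))) (U (Nat.sqrt (2 * N)) (INR j / INR P))))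
  = INR P * sumR 1 (2 * N) (fun n => conv N f g (Z.of_nat n) * ind_S n).
Proof.
  intros HN HP. set (Mx := Nat.sqrt (2 * N)).
  rewrite (T_identity N Mx f g eq_refl).
  rewrite (sR_ext 0 P _ (fun j => sR 1 N (fun m => sR 1 N (fun l => sR 1 Mx (fun s =>
     f m * g l * cos (2 * PI * ((INR (s * s) - INR m - INR l) * (INR j / INR P)))))))).
  2:{ intros. apply prod_fst. }
  rewrite sR_swap. rewrite <- sR_scal. apply sR_ext. intros m Hm.
  rewrite sR_swap. rewrite <- sR_scal. apply sR_ext. intros l Hl.
  rewrite sR_swap. rewrite <- (sR_scal 1 Mx (f m * g l)), <- sR_scal. apply sR_ext. intros s Hs.
  rewrite sR_scal.
  assert (Hss: (s * s <= 2 * N)%nat).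
  { assert (s <= Mx)%nat by lia. pose proof (Nat.sqrt_spec (2 * N) ltac:(lia)) as [H1 _]. fold Mx in H1. nia. }
  pose proof (orth P (Z.of_nat (s * s) - Z.of_nat m - Z.of_nat l) ltac:(lia) ltac:(lia)) as HO.
  rewrite (sR_ext 0 P _ (fun j => cos (2 * PI * IZR (Z.of_nat (s * s) - Z.of_nat m - Z.of_nat l) * INR j / INR P))).
  2:{ intros j _. f_equal. rewrite !minus_IZR, <- !INR_IZR_INZ. field. apply not_0_INR; lia. }
  rewrite HO.
  destruct (Z.eqb (Z.of_nat (s * s) - Z.of_nat m - Z.of_nat l) 0) eqn:E1, (Nat.eqb (s * s) (m + l)) eqn:E2;
  rewrite ?Z.eqb_eq, ?Z.eqb_neq, ?Nat.eqb_eq, ?Nat.eqb_neq in *; try lia; ring.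
Qed.

Lemma parseval N f (P : nat) : (1 <= N)%nat -> (N <= P)%nat ->
  sR 0 P (fun j => Cmod (fhat N f (INR j / INR P)) ^ 2) = INR P * sR 1 N (fun m => f m * f m).
Proof.
  intros HN HP.
  rewrite (sR_ext 0 P _ (fun j => sR 1 N (fun m => sR 1 N (fun m' => f m * f m' * cos (2 * PI * IZR (Z.of_nat m' - Z.of_nat m) * INR j / INR P))))).
  2:{ intros j _. rewrite Cmod_sq, fhat_sC, fst_sC, snd_sC, !sq_sR, <- sR_plus. apply sR_ext. intros m _.
      rewrite <- sR_plus. apply sR_ext. intros m' _. unfold e, Cmult, RtoC; simpl.
      rewrite minus_IZR, <- !INR_IZR_INZ.
      replace (2 * PI * (INR m' - INR m) * INR j / INR P) with (2 * PI * (- INR m * (INR j / INR P)) - 2 * PI * (- INR m' * (INR j / INR P))) by (field; apply not_0_INR; lia).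
      rewrite cos_minus. ring. }
  rewrite sR_swap, <- sR_scal. apply sR_ext. intros m Hm. rewrite sR_swap.
  rewrite (sR_ext 1 N _ (fun m' => f m * f m' * sR 0 P (fun j => cos (2 * PI * IZR (Z.of_nat m' - Z.of_nat m) * INR j / INR P)))).
  2:{ intros. rewrite sR_scal. reflexivity. }
  rewrite (sR_ext 1 N _ (fun m' => if Nat.eqb m' m then INR P * (f m * f m') else 0)).
  2:{ intros m' Hm'. rewrite orth by lia.
      destruct (Z.eqb (Z.of_nat m' - Z.of_nat m) 0) eqn:E1, (Nat.eqb m' m) eqn:E2;
      rewrite ?Z.eqb_eq, ?Z.eqb_neq, ?Nat.eqb_eq, ?Nat.eqb_neq in *; try lia; ring. }
  rewrite sR_delta. replace (Nat.leb 1 m && Nat.ltb m (1 + N))%bool with true; [ring|].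
  symmetry; apply andb_true_iff; split; [apply Nat.leb_le| apply Nat.ltb_lt]; lia.
Qed.

Lemma Cmod_sC_le a n F : Cmod (sC a n F) <= sR a n (fun i => Cmod (F i)).
Proof.
  revert a; induction n; intros a.
  - unfold sC; simpl. rewrite sR_0. replace (Cmod (RtoC 0)) with 0; [lra|].
    symmetry. unfold Cmod, RtoC; simpl. replace (0 * (0 * 1) + 0 * (0 * 1)) with 0 by ring. apply sqrt_0.
  - rewrite sC_S, sR_S. eapply Rle_trans; [apply Cmod_triangle|]. specialize (IHn (S a)). lra.
Qed.

Lemma Cmod_e x : Cmod (e x) = 1.
Proof. unfold Cmod, e; simpl. pose proof (sin2_cos2 (2 * PI * x)). unfold Rsqr in H.
  match goal with |- sqrt ?z = 1 => replace z with 1 by nra end. apply sqrt_1. Qed.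

Lemma fhat_le N f th : (forall n, (1 <= n <= N)%nat -> -1 <= f n <= 1) -> Cmod (fhat N f th) <= INR N.
Proof.
  intros Hf. rewrite fhat_sC. eapply Rle_trans; [apply Cmod_sC_le|].
  eapply Rle_trans; [apply sR_le with (G := fun _ => 1)|].
  - intros n Hn. rewrite Cmod_mult, Cmod_e, Cmod_R, Rmult_1_r. apply Rabs_le. apply Hf. lia.
  - rewrite sR_const. lra.
Qed.

Lemma U_le M th : Cmod (U M th) <= INR M.
Proof.
  unfold U. eapply Rle_trans; [apply Cmod_sC_le|].
  rewrite (sR_ext 1 M _ (fun _ => 1)); [rewrite sR_const; lra|]. intros; apply Cmod_e.
Qed.

Lemma e_shift x (n : nat) : e (x - INR n) = e x.
Proof.
  unfold e. replace (2 * PI * (x - INR n)) with (2 * PI * x + 2 * IZR (- Z.of_nat n) * PI)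
    by (rewrite opp_IZR, <- INR_IZR_INZ; ring).
  rewrite cos_periodZ, sin_periodZ. reflexivity.
Qed.

Lemma fhat_shift1 N f th : fhat N f (1 + th) = fhat N f th.
Proof.
  rewrite !fhat_sC. apply sC_ext. intros n _. f_equal.
  replace (- INR n * (1 + th)) with (- INR n * th - INR n) by ring. apply e_shift.
Qed.

Lemma count_bound n (c r : R) : 0 <= r ->
  sR 0 n (fun j => if Rlt_dec (Rabs (INR j - c)) r then 1 else 0) <= 2 * r + 1.
Proof.
  intros Hr. set (lo := c - r). set (hi := c + r).
  assert (Hinv: sR 0 n (fun j => if Rlt_dec (Rabs (INR j - c)) r then 1 else 0) <= Rmax 0 (Rmin (INR n - 1) hi - lo + 1)).
  { induction n.
    - rewrite sR_0. apply Rmax_l.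
    - rewrite sR_Sr. simpl (0 + n)%nat. rewrite S_INR.
      destruct (Rlt_dec (Rabs (INR n - c)) r) as [Hin|Hin].
      + apply Rabs_def2 in Hin. unfold lo, hi in *.
        assert (Rmin (INR n - 1) (c + r) = INR n - 1) by (apply Rmin_left; lra).
        assert (Rmin (INR n + 1 - 1) (c + r) = INR n + 1 - 1) by (apply Rmin_left; lra).
        rewrite H in IHn. rewrite H0.
        rewrite Rmax_right in IHn by lra. rewrite Rmax_right by lra. lra.
      + rewrite Rplus_0_r. eapply Rle_trans; [exact IHn|]. apply Rle_max_compat_l.
        apply Rplus_le_compat_r, Rplus_le_compat_r. apply Rle_min_compat_r. lra. }
  eapply Rle_trans; [exact Hinv|]. apply Rmax_lub; [lra|]. unfold lo, hi.
  pose proof (Rmin_r (INR n - 1) (c + r)). lra.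
Qed.

Lemma rpow32 x : 0 < x -> Rpower x (3 / 2) = x * sqrt x.
Proof.
  intros Hx. replace (3/2) with (1 + /2) by field. rewrite Rpower_plus, Rpower_1, Rpower_sqrt; auto.
Qed.

Lemma r4_facts (N k : R) : 1 <= k -> (10 * k) ^ 4 <= N ->
  let r := sqrt (sqrt N) in 10 * k <= r /\ sqrt N = r * r /\ N = r * r * r * r.
Proof.
  intros Hk HN r.
  assert (HN0: 0 <= N) by (assert (0 <= (10 * k)^4) by (apply pow_le; lra); lra).
  assert (E1: sqrt N = r * r) by (unfold r; rewrite sqrt_sqrt; [reflexivity| apply sqrt_pos]).
  assert (E2: N = r * r * r * r) by (rewrite <- (sqrt_sqrt N HN0), E1; ring).
  split; [|split; auto].
  assert (0 <= r) by apply sqrt_pos.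
  destruct (Rle_dec (10 * k) r); auto.
  exfalso. assert (r < 10 * k) by lra.
  assert (r * r < 10 * k * (10 * k)) by nra.
  assert (r * r * (r * r) < (10 * k * (10 * k)) * (10 * k * (10 * k))) by (apply Rmult_le_0_lt_compat; nra).
  simpl in HN. nra.
Qed.

Lemma weyl_num (M q k N : R) : 0 <= M -> M * M <= 2 * N -> k + 1 <= q -> q <= 4 * M + 2 * k -> 1 <= k ->
  (10 * k) ^ 4 <= N ->
  M + 2 * (2 * M / q + 1) * (4 * M + 4 * q * sqrt q) <= 81 * (N / k).
Proof.
  intros HM HM2 Hq1 Hq2 Hk HN.
  destruct (r4_facts N k Hk HN) as [Hr [E1 E2]]. set (r := sqrt (sqrt N)) in *.
  assert (Hr0: 10 <= r) by lra.
  assert (HMr: M <= 2 * r * r) by nra.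
  assert (Hq3: q <= 9 * (r * r)) by nra.
  assert (Hsq: sqrt q <= 3 * r).
  { rewrite <- (sqrt_square (3 * r)) by lra. apply sqrt_le_1_alt. nra. }
  assert (Hsq0: 0 <= sqrt q) by apply sqrt_pos.
  assert (Hq0: 0 < q) by lra.
  replace (M + 2 * (2 * M / q + 1) * (4 * M + 4 * q * sqrt q)) with
    (16 * (M * M) / q + 16 * M * sqrt q + 9 * M + 8 * q * sqrt q) by (field; lra).
  assert (T1: 16 * (M * M) / q <= 32 * (N / k)).
  { apply Rle_trans with (16 * (2 * N) / k).
    - unfold Rdiv. apply Rmult_le_compat; try nra.
      + apply Rlt_le, Rinv_0_lt_compat; lra.
      + apply Rinv_le_contravar; lra.
    - right; field; lra. }
  assert (T2: 16 * M * sqrt q <= 96 * (r * r * r)) by nra.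
  assert (T3: 8 * q * sqrt q <= 216 * (r * r * r)) by nra.
  assert (T4: 9 * M <= 18 * (r * r * r)) by nra.
  assert (T5: 330 * (r * r * r) <= 49 * (N / k)).
  { rewrite E2. apply Rmult_le_reg_r with k; [lra|]. unfold Rdiv. field_simplify; [|lra]. nra. }
  lra.
Qed.

Lemma major_num (be q k N : R) : 1 <= k -> (10 * k) ^ 4 <= N -> 0 <= q <= k -> k / (4 * N) <= be ->
  3 / sqrt be + 2 * q <= 9 * sqrt (N / k).
Proof.
  intros Hk HN Hq Hbe.
  destruct (r4_facts N k Hk HN) as [Hr [E1 E2]]. set (r := sqrt (sqrt N)) in *.
  assert (HN0: 0 < N) by (rewrite E2; apply Rmult_lt_0_compat; [apply Rmult_lt_0_compat; [apply Rmult_lt_0_compat|]|]; lra).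
  assert (Hbe0: 0 < be) by (apply Rlt_le_trans with (k / (4 * N)); auto; apply Rdiv_lt_0_compat; lra).
  assert (Hs: sqrt (k / (4 * N)) <= sqrt be) by (apply sqrt_le_1_alt; auto).
  assert (Es: sqrt (k / (4 * N)) * sqrt (N / k) = / 2).
  { rewrite <- sqrt_mult by (apply Rlt_le, Rdiv_lt_0_compat; lra).
    replace (k / (4 * N) * (N / k)) with (/2 * / 2) by (field; lra). rewrite sqrt_square; lra. }
  assert (Hsk: 0 < sqrt (k / (4 * N))) by (apply sqrt_lt_R0, Rdiv_lt_0_compat; lra).
  assert (HsN: 0 < sqrt (N / k)) by (apply sqrt_lt_R0, Rdiv_lt_0_compat; lra).
  assert (H1: 3 / sqrt be <= 6 * sqrt (N / k)).
  { apply Rle_trans with (3 / sqrt (k / (4 * N))).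
    - unfold Rdiv. apply Rmult_le_compat_l; [lra|]. apply Rinv_le_contravar; auto.
    - apply Rmult_le_reg_r with (sqrt (k / (4 * N))); auto. field_simplify; lra. }
  assert (H2: 2 * q <= 3 * sqrt (N / k)).
  { assert (Hsq: sqrt k <= k) by (rewrite <- (sqrt_square k) at 2 by lra; apply sqrt_le_1_alt; nra).
    assert (Hsk0: 0 < sqrt k) by (apply sqrt_lt_R0; lra).
    assert (EN: sqrt (N / k) = r * r / sqrt k) by (rewrite sqrt_div_alt by lra; rewrite E1; reflexivity).
    rewrite EN. apply Rmult_le_reg_r with (sqrt k); auto. field_simplify; [|lra]. nra. }
  lra.
Qed.

Definition lowj (k N j : nat) : R :=
  sR 1 k (fun q => sR 0 (k + 1) (fun a =>
    if Rlt_dec (Rabs (INR j / INR (2 * N) - INR a / INR q)) (INR k / (4 * INR N)) then 1 else 0)).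

Lemma sR_ge_term a n F i : (forall x, (a <= x < a + n)%nat -> 0 <= F x) -> (a <= i < a + n)%nat -> F i <= sR a n F.
Proof.
  revert a; induction n; intros a HF Hi; [lia|].
  rewrite sR_S. destruct (Nat.eq_dec i a).
  - subst. assert (0 <= sR (S a) n F) by (apply sR_nonneg; intros; apply HF; lia). lra.
  - assert (F i <= sR (S a) n F) by (apply IHn; [intros; apply HF|]; lia).
    assert (0 <= F a) by (apply HF; lia). lra.
Qed.

Lemma lowj_nonneg k N j : 0 <= lowj k N j.
Proof.
  unfold lowj. apply sR_nonneg. intros. apply sR_nonneg. intros. match goal with |- context [Rlt_dec ?x ?y] => destruct (Rlt_dec x y) end; lra.
Qed.

Lemma UU_bound_sq (x B : R) : 0 <= x -> 0 <= B -> x ^ 2 <= B ^ 2 -> x <= B.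
Proof. intros. destruct (Rle_dec x B); auto. exfalso. assert (B < x) by lra.
  assert (B * B < x * x) by (apply Rmult_le_0_lt_compat; lra). simpl in H1. lra. Qed.

Lemma perj (k N : nat) (delta : R) (f g : nat -> R) (j : nat) :
  (1 <= k)%nat -> (10 * INR k) ^ 4 <= INR N -> 0 < delta ->
  (forall n, (1 <= n <= N)%nat -> -1 <= f n <= 1) ->
  (forall n, (1 <= n <= N)%nat -> -1 <= g n <= 1) ->
  (forall (a q : nat), (1 <= a <= k)%nat -> (1 <= q <= k)%nat ->
       forall beta : R, Cmod (fhat N f (INR a / INR q + beta)) <= delta * Rabs beta * (INR N) ^ 2) ->
  (j < 2 * N)%nat ->
  Cmod (fhat N f (INR j / INR (2 * N))) * Cmod (fhat N g (INR j / INR (2 * N))) *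
    Cmod (U (Nat.sqrt (2 * N)) (INR j / INR (2 * N))) <=
  9 * sqrt (INR N / INR k) * (Cmod (fhat N f (INR j / INR (2 * N))) ^ 2 + Cmod (fhat N g (INR j / INR (2 * N))) ^ 2) / 2
  + delta * (INR k / 4) * INR N * INR N * INR (Nat.sqrt (2 * N)) * lowj k N j.
Proof.
  intros Hk HN Hd Hf Hg Hyp Hj.
  set (Mx := Nat.sqrt (2 * N)). set (P := (2 * N)%nat). set (th := INR j / INR P).
  set (FF := Cmod (fhat N f th)). set (GG := Cmod (fhat N g th)). set (UU := Cmod (U Mx th)).
  assert (HkR: 1 <= INR k) by (replace 1 with (INR 1) by reflexivity; apply le_INR; lia).
  assert (HNR: 1 <= INR N).
  { assert (1 <= (10 * INR k) ^ 4) by (replace 1 with (1 ^ 4) by ring; apply pow_incr; lra). lra. }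
  assert (HN1: (1 <= N)%nat) by (apply INR_le; simpl; lra).
  assert (HPR: 0 < INR P) by (apply lt_0_INR; unfold P; lia).
  assert (HFF: 0 <= FF) by apply Cmod_ge_0. assert (HGG: 0 <= GG) by apply Cmod_ge_0. assert (HUU: 0 <= UU) by apply Cmod_ge_0.
  set (B := 9 * sqrt (INR N / INR k)).
  assert (HB: 0 <= B) by (unfold B; pose proof (sqrt_pos (INR N / INR k)); lra).
  assert (Hlow0: 0 <= lowj k N j) by apply lowj_nonneg.
  assert (HMx: 0 <= INR Mx) by apply pos_INR.
  assert (Hsec: 0 <= delta * (INR k / 4) * INR N * INR N * INR Mx * lowj k N j).
  { repeat apply Rmult_le_pos; lra. }
  assert (Hnonlow: UU <= B -> FF * GG * UU <= B * (FF ^ 2 + GG ^ 2) / 2 + delta * (INR k / 4) * INR N * INR N * INR Mx * lowj k N j).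
  { intros HUB. assert (FF * GG * UU <= FF * GG * B) by (apply Rmult_le_compat_l; [nra| auto]).
    assert (FF * GG <= (FF ^ 2 + GG ^ 2) / 2) by (pose proof (pow2_ge_0 (FF - GG)); simpl in *; nra).
    assert (FF * GG * B <= (FF ^ 2 + GG ^ 2) / 2 * B) by (apply Rmult_le_compat_r; auto). lra. }
  set (Q := (4 * Mx + 2 * k)%nat).
  destruct (dirichlet P j Q ltac:(unfold P; lia) ltac:(unfold Q; lia)) as [q [a [Hq [Hga Hz]]]].
  assert (HqR: 0 < INR q) by (apply lt_0_INR; lia).
  assert (HQR: 0 < INR Q) by (apply lt_0_INR; unfold Q; lia).
  set (be := th - INR a / INR q).
  assert (Hzr: Rabs (INR q * INR j - INR P * INR a) * INR Q < INR P).
  { apply IZR_lt in Hz. rewrite mult_IZR, abs_IZR, minus_IZR, <- !INR_IZR_INZ, !mult_INR in Hz. exact Hz. }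
  assert (Hbe: Rabs be < / (INR q * INR Q)).
  { unfold be, th. replace (INR j / INR P - INR a / INR q) with ((INR q * INR j - INR P * INR a) / (INR P * INR q)) by (field; lra).
    unfold Rdiv. rewrite Rabs_mult, (Rabs_right (/ (INR P * INR q))) by (apply Rle_ge, Rlt_le, Rinv_0_lt_compat; nra).
    apply Rmult_lt_reg_r with (INR P * INR q * INR Q); [repeat apply Rmult_lt_0_compat; lra|].
    replace (Rabs (INR q * INR j - INR P * INR a) * / (INR P * INR q) * (INR P * INR q * INR Q)) with (Rabs (INR q * INR j - INR P * INR a) * INR Q) by (field; lra).
    replace (/ (INR q * INR Q) * (INR P * INR q * INR Q)) with (INR P) by (field; lra). exact Hzr. }
  assert (Haq: (a <= q)%nat).
  { assert (INR P * INR a < INR q * INR j + INR P).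
    { assert (Rabs (INR q * INR j - INR P * INR a) < INR P).
      { assert (1 <= INR Q) by (replace 1 with (INR 1) by reflexivity; apply le_INR; unfold Q; lia).
        pose proof (Rabs_pos (INR q * INR j - INR P * INR a)). nra. }
      apply Rabs_def2 in H. lra. }
    assert (INR j + 1 <= INR P) by (rewrite <- S_INR; apply le_INR; unfold P; lia).
    assert (INR a < INR q + 1) by nra.
    rewrite <- S_INR in H1. apply INR_lt in H1. lia. }
  assert (Eth: th = INR a / INR q + be) by (unfold be; ring).
  assert (Hth0: 0 <= th) by (unfold th; apply Rdiv_le_0_compat; [apply pos_INR| lra]).
  destruct (le_lt_dec q k) as [Hqk|Hqk].
  - destruct (Rlt_dec (Rabs be) (INR k / (4 * INR N))) as [Hlow|Hhigh].
    +
      assert (HFb: FF <= delta * Rabs be * INR N ^ 2).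
      { unfold FF. destruct a as [|a'].
        - assert (q = 1%nat) by (rewrite Nat.gcd_0_l in Hga; auto). subst q.
          assert (th = INR 1 / INR 1 + be - 1) by (rewrite Eth; simpl; field).
          rewrite H. replace (INR 1 / INR 1 + be - 1) with be by (simpl; field).
          rewrite <- fhat_shift1. replace (1 + be) with (INR 1 / INR 1 + be) by (simpl; field).
          apply Hyp; lia.
        - rewrite Eth. apply Hyp; lia. }
      assert (HF2: FF <= delta * (INR k / 4) * INR N).
      { eapply Rle_trans; [exact HFb|]. replace (delta * (INR k / 4) * INR N) with (delta * (INR k / (4 * INR N)) * INR N ^ 2) by (field; lra).
        apply Rmult_le_compat_r; [apply pow_le; lra|]. apply Rmult_le_compat_l; lra. }
      assert (HG2: GG <= INR N) by (apply fhat_le; auto).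
      assert (HU2: UU <= INR Mx) by apply U_le.
      assert (Hl1: 1 <= lowj k N j).
      { unfold lowj. eapply Rle_trans; [|eapply (sR_ge_term 1 k _ q)].
        - eapply Rle_trans; [|eapply (sR_ge_term 0 (k + 1) _ a)].
          + cbv beta. match goal with |- context [Rlt_dec ?x ?y] => destruct (Rlt_dec x y) as [_|Hn] end; [lra|]. exfalso; apply Hn.
            fold P. fold th. replace (th - INR a / INR q) with be by reflexivity. exact Hlow.
          + intros; cbv beta; match goal with |- context [Rlt_dec ?x ?y] => destruct (Rlt_dec x y) end; lra.
          + lia.
        - intros; apply sR_nonneg; intros; cbv beta; match goal with |- context [Rlt_dec ?x ?y] => destruct (Rlt_dec x y) end; lra.
        - lia. }
      assert (FF * GG * UU <= delta * (INR k / 4) * INR N * INR N * INR Mx).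
      { apply Rmult_le_compat; try nra; apply Rmult_le_compat; auto. }
      assert (delta * (INR k / 4) * INR N * INR N * INR Mx <= delta * (INR k / 4) * INR N * INR N * INR Mx * lowj k N j).
      { rewrite <- (Rmult_1_r (delta * (INR k / 4) * INR N * INR N * INR Mx)) at 1. apply Rmult_le_compat_l; auto.
        repeat apply Rmult_le_pos; lra. }
      assert (0 <= B * (FF ^ 2 + GG ^ 2) / 2) by (apply Rmult_le_pos; [apply Rmult_le_pos; nra| lra]).
      unfold B in *. lra.
    +
      apply Hnonlow. unfold UU.
      assert (Hbe0: be <> 0).
      { intro H0. apply Hhigh. rewrite H0, Rabs_R0. apply Rdiv_lt_0_compat; lra. }
      eapply Rle_trans; [apply (major Mx q Q (Z.of_nat a) th be); auto; try lia; try lra|].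
      * rewrite <- INR_IZR_INZ. exact Eth.
      * unfold B. apply major_num; auto; [split; [lra| apply le_INR; lia]| lra].
  -
    apply Hnonlow. unfold UU. apply UU_bound_sq; [apply Cmod_ge_0| auto|].
    eapply Rle_trans; [apply (weyl Mx q a Q th be); auto; try lia; lra|].
    assert (HM2: INR Mx * INR Mx <= 2 * INR N).
    { rewrite <- mult_INR. replace (2 * INR N) with (INR (2 * N)) by (rewrite mult_INR; reflexivity).
      apply le_INR. unfold Mx. apply Nat.sqrt_spec. lia. }
    eapply Rle_trans; [apply (weyl_num (INR Mx) (INR q) (INR k) (INR N)); auto|].
    + rewrite <- S_INR. apply le_INR. lia.
    + replace (4 * INR Mx + 2 * INR k) with (INR Q) by (unfold Q; rewrite plus_INR, !mult_INR; simpl; ring). apply le_INR; lia.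
    + unfold B. rewrite Rpow_mult_distr. rewrite pow2_sqrt; [lra|]. apply Rdiv_le_0_compat; lra.
Qed.

Lemma lowj_sum k N : (1 <= N)%nat ->
  sR 0 (2 * N) (fun j => lowj k N j) <= INR k * (INR k + 1) * (INR k + 1).
Proof.
  intros HN. unfold lowj. rewrite sR_swap.
  assert (HNR: 0 < INR N) by (apply lt_0_INR; lia).
  eapply Rle_trans; [apply sR_le with (G := fun _ => (INR k + 1) * (INR k + 1))|].
  - intros q Hq. rewrite sR_swap.
    eapply Rle_trans; [apply sR_le with (G := fun _ => INR k + 1)|].
    + intros a Ha.
      eapply Rle_trans; [apply sR_le with (G := fun j => if Rlt_dec (Rabs (INR j - INR (2 * N) * INR a / INR q)) (INR k / 2) then 1 else 0)|].
      * intros j Hj. destruct (Rlt_dec (Rabs (INR j / INR (2 * N) - INR a / INR q)) (INR k / (4 * INR N))) as [H1|H1];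
        destruct (Rlt_dec (Rabs (INR j - INR (2 * N) * INR a / INR q)) (INR k / 2)) as [H2|H2]; try lra.
        exfalso; apply H2. assert (HqR: 0 < INR q) by (apply lt_0_INR; lia).
        replace (INR j - INR (2 * N) * INR a / INR q) with (INR (2 * N) * (INR j / INR (2 * N) - INR a / INR q))
          by (rewrite mult_INR; simpl; field; lra).
        rewrite Rabs_mult, Rabs_right by (apply Rle_ge, pos_INR).
        rewrite mult_INR. simpl (INR 2).
        replace (INR k / 2) with (2 * INR N * (INR k / (4 * INR N))) by (field; lra).
        rewrite mult_INR in H1. simpl (INR 2) in H1. apply Rmult_lt_compat_l; lra.
      * pose proof (count_bound (2 * N) (INR (2 * N) * INR a / INR q) (INR k / 2) ltac:(pose proof (pos_INR k); lra)). lra.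
    + rewrite sR_const, plus_INR. simpl (INR 1). lra.
  - rewrite sR_const. lra.
Qed.

Theorem proposition4p4 :
  forall (lambda : R), 0 < lambda ->
  forall (k : nat), / (lambda ^ 2) = INR k ->
  exists N0 : nat,
  forall (delta : R), 0 < delta ->
  forall (N : nat), (N0 <= N)%nat ->
  forall (f g : nat -> R),
    (forall n, (1 <= n <= N)%nat -> -1 <= f n <= 1) ->
    (forall n, (1 <= n <= N)%nat -> -1 <= g n <= 1) ->
    (forall (a q : nat), (1 <= a <= k)%nat -> (1 <= q <= k)%nat ->
       forall beta : R,
         Cmod (fhat N f (INR a / INR q + beta)) <= delta * Rabs beta * (INR N) ^ 2) ->
    Rabs (sumR 1 (2 * N) (fun n => conv N f g (Z.of_nat n) * ind_S n))
      <= 10 * (delta * / lambda ^ 8 + lambda) * Rpower (INR N) (3 / 2).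
Proof.
  intros lambda Hl k Hk.
  assert (Hl2: 0 < lambda ^ 2) by (apply pow_lt; auto).
  assert (Hk0: (1 <= k)%nat).
  { destruct k; [|lia]. change (INR 0) with 0 in Hk. exfalso. assert (0 < / lambda ^ 2) by (apply Rinv_0_lt_compat; auto). lra. }
  exists (Nat.pow (10 * k) 4).
  intros delta Hd N HN f g Hf Hg Hyp.
  assert (HkR: 1 <= INR k) by (replace 1 with (INR 1) by reflexivity; apply le_INR; lia).
  assert (HNk: (10 * INR k) ^ 4 <= INR N).
  { replace ((10 * INR k) ^ 4) with (INR (Nat.pow (10 * k) 4)) by (rewrite pow_INR, mult_INR; simpl; ring). apply le_INR; auto. }
  assert (HNR: 1 <= INR N).
  { assert (1 <= (10 * INR k) ^ 4) by (replace 1 with (1 ^ 4) by ring; apply pow_incr; lra). lra. }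
  assert (HN1: (1 <= N)%nat) by (apply INR_le; simpl; lra).
  set (T := sumR 1 (2 * N) (fun n => conv N f g (Z.of_nat n) * ind_S n)).
  set (P := (2 * N)%nat).
  assert (HPR: INR P = 2 * INR N) by (unfold P; rewrite mult_INR; reflexivity).
  set (Mx := Nat.sqrt (2 * N)).
  set (FF := fun j => Cmod (fhat N f (INR j / INR P))).
  set (GG := fun j => Cmod (fhat N g (INR j / INR P))).
  set (UU := fun j => Cmod (U Mx (INR j / INR P))).
  set (B := 9 * sqrt (INR N / INR k)).
  set (Cc := delta * (INR k / 4) * INR N * INR N * INR Mx).
  assert (Hfour := fourier N f g P HN1 eq_refl). fold Mx in Hfour. fold T in Hfour.
  assert (H1: INR P * Rabs T <= sR 0 P (fun j => FF j * GG j * UU j)).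
  { rewrite <- (Rabs_right (INR P)) by (apply Rle_ge, pos_INR). rewrite <- Rabs_mult, <- Hfour.
    eapply Rle_trans; [apply sR_abs|]. apply sR_le. intros j _.
    unfold FF, GG, UU. rewrite <- !Cmod_mult. apply re_le_Cmod. }
  assert (H2: sR 0 P (fun j => FF j * GG j * UU j) <=
     sR 0 P (fun j => B * (FF j ^ 2 + GG j ^ 2) / 2 + Cc * lowj k N j)).
  { apply sR_le. intros j Hj. unfold FF, GG, UU, B, Cc, P, Mx. apply perj; auto. unfold P in Hj; lia. }
  rewrite sR_plus in H2.
  assert (E3: sR 0 P (fun j => B * (FF j ^ 2 + GG j ^ 2) / 2) =
     B / 2 * (sR 0 P (fun j => Cmod (fhat N f (INR j / INR P)) ^ 2) + sR 0 P (fun j => Cmod (fhat N g (INR j / INR P)) ^ 2))).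
  { rewrite <- sR_plus, <- sR_scal. apply sR_ext. intros. unfold FF, GG. field. }
  rewrite E3 in H2. rewrite !parseval in H2 by (unfold P; lia).
  assert (Hsf: sR 1 N (fun m => f m * f m) <= INR N).
  { eapply Rle_trans; [apply sR_le with (G := fun _ => 1)|]; [intros m Hm; specialize (Hf m ltac:(lia)); nra|]. rewrite sR_const; lra. }
  assert (Hsg: sR 1 N (fun m => g m * g m) <= INR N).
  { eapply Rle_trans; [apply sR_le with (G := fun _ => 1)|]; [intros m Hm; specialize (Hg m ltac:(lia)); nra|]. rewrite sR_const; lra. }
  rewrite (sR_scal 0 P Cc (fun j => lowj k N j)) in H2.
  pose proof (lowj_sum k N HN1) as Hlow. fold P in Hlow.
  assert (HB: 0 <= B) by (unfold B; pose proof (sqrt_pos (INR N / INR k)); lra).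
  assert (HMx: 0 <= INR Mx) by apply pos_INR.
  assert (HCc: 0 <= Cc) by (unfold Cc; repeat apply Rmult_le_pos; lra).
  assert (H4: INR P * Rabs T <= B / 2 * (INR P * INR N + INR P * INR N) + Cc * (INR k * (INR k + 1) * (INR k + 1))).
  { eapply Rle_trans; [exact H1|]. eapply Rle_trans; [exact H2|].
    apply Rplus_le_compat.
    - apply Rmult_le_compat_l; [lra|]. assert (0 <= INR P) by apply pos_INR. nra.
    - apply Rmult_le_compat_l; auto. }
  assert (HNpos: 0 < INR N) by lra.
  assert (HTb: Rabs T <= B * INR N + Cc * (INR k * (INR k + 1) * (INR k + 1)) / (2 * INR N)).
  { rewrite HPR in H4. apply Rmult_le_reg_l with (2 * INR N); [lra|].
    replace (2 * INR N * (B * INR N + Cc * (INR k * (INR k + 1) * (INR k + 1)) / (2 * INR N)))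
      with (B / 2 * (2 * INR N * INR N + 2 * INR N * INR N) + Cc * (INR k * (INR k + 1) * (INR k + 1))) by (field; lra).
    lra. }
  assert (Hlam: lambda * lambda = / INR k).
  { rewrite <- Hk. simpl. field. lra. }
  assert (Hsq: sqrt (INR N / INR k) = lambda * sqrt (INR N)).
  { unfold Rdiv. rewrite Rmult_comm, sqrt_mult by (try apply Rlt_le, Rinv_0_lt_compat; lra). rewrite <- Hlam.
    rewrite sqrt_square by lra. reflexivity. }
  assert (Hl8: / lambda ^ 8 = INR k ^ 4).
  { replace (lambda ^ 8) with ((lambda ^ 2) ^ 4) by ring. rewrite <- Hk. field. lra. }
  assert (HsN: 0 < sqrt (INR N)) by (apply sqrt_lt_R0; lra).
  assert (HMb: INR Mx <= 2 * sqrt (INR N)).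
  { apply UU_bound_sq; [auto| lra|].
    assert (INR Mx * INR Mx <= 2 * INR N).
    { rewrite <- mult_INR. replace (2 * INR N) with (INR (2 * N)) by (rewrite mult_INR; reflexivity).
      apply le_INR. unfold Mx. apply Nat.sqrt_spec. lia. }
    simpl. rewrite !Rmult_1_r. replace (2 * sqrt (INR N) * (2 * sqrt (INR N))) with (4 * (sqrt (INR N) * sqrt (INR N))) by ring.
    rewrite sqrt_sqrt by lra. lra. }
  rewrite rpow32 by lra. rewrite Hl8.
  fold T. eapply Rle_trans; [exact HTb|].
  unfold B, Cc. rewrite Hsq.
  assert (Hk4: INR k * (INR k + 1) * (INR k + 1) <= 4 * INR k ^ 3) by (simpl; nra).
  assert (Ht2: delta * (INR k / 4) * INR N * INR N * INR Mx * (INR k * (INR k + 1) * (INR k + 1)) / (2 * INR N)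
     <= delta * INR k ^ 4 * INR N * sqrt (INR N)).
  { replace (delta * (INR k / 4) * INR N * INR N * INR Mx * (INR k * (INR k + 1) * (INR k + 1)) / (2 * INR N))
      with (delta * INR k * INR N * INR Mx * (INR k * (INR k + 1) * (INR k + 1)) / 8) by (field; lra).
    assert (0 <= delta * INR k * INR N) by (repeat apply Rmult_le_pos; lra).
    assert (delta * INR k * INR N * INR Mx * (INR k * (INR k + 1) * (INR k + 1)) <=
            delta * INR k * INR N * (2 * sqrt (INR N)) * (4 * INR k ^ 3)).
    { apply Rmult_le_compat; try nra; apply Rmult_le_compat_l; auto. }
    replace (delta * INR k ^ 4 * INR N * sqrt (INR N)) with (delta * INR k * INR N * (2 * sqrt (INR N)) * (4 * INR k ^ 3) / 8) by (simpl; field).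
    lra. }
  assert (0 <= lambda * sqrt (INR N) * INR N) by (apply Rmult_le_pos; [apply Rmult_le_pos|]; lra).
  assert (0 <= delta * INR k ^ 4 * INR N * sqrt (INR N)) by (repeat apply Rmult_le_pos; try lra; apply pow_le; lra).
  nra.
Qed.
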